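(* Let $m,n$ be positive integers. The pseudograph $\mathcal{K}_{m,n}$ admits a nullhomotopic knight's tour if and only if neither of the following holds: (i) $m$ and $n$ are both odd and at least one of $m,n$ is greater than $1$; (ii) $m\le 2$, $n\le 2$, and at least one of $m,n$ is greater than $1$.
   Context: Let $\mathcal{P}$ be the graph with vertex set $\mathbb{Z}^2$ in which $(a,b)$ and $(a',b')$ are adjacent iff $\{|a-a'|,|b-b'|\}=\{1,2\}$. For positive integers $m,n$ let $G$ be the group of automorphisms of $\mathcal{P}$ generated by $\tau(a,b)=(a+m,b)$ and $\sigma(a,b)=(m-1-a,\,b+n)$; it acts freely, and the knight's pseudograph of the $m\times n$ Klein bottle board is the quotient $\mathcal{K}_{m,n}=\mathcal{P}/G$, whose vertices are orbits of vertices (represented by $(a,b)$ with $0\le a<m$, $0\le b<n$) and whose edges are orbits of edges (multiple edges and loops may occur). The quotient map $\phi_K:\mathcal{P}\to\mathcal{K}_{m,n}$ is a covering map. A knight's tour is a closed walk visiting every vertex exactly once apart from the repeated start/end vertex (a Hamiltonian cycle; for a single vertex the trivial walk counts). Regard a tour as a closed walk starting and ending at vertex $(0,0)$; it lifts uniquely to a walk in $\mathcal{P}$ starting at $(0,0)$. The tour is nullhomotopic if this lift ends at $(0,0)$ (equivalently, the corresponding closed curve on the Klein bottle is contractible). *)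

(* Defs.v *)
From Stdlib Require Import ZArith Lia.
Open Scope Z_scope.

Definition pt := (Z * Z)%type.

Definition knight_adj (p q : pt) : Prop :=
  let da := Z.abs (fst p - fst q) in
  let db := Z.abs (snd p - snd q) in
  (da = 1 /\ db = 2) \/ (da = 2 /\ db = 1).

Definition tau (m n : Z) (p : pt) : pt := (fst p + m, snd p).
Definition tau_inv (m n : Z) (p : pt) : pt := (fst p - m, snd p).
Definition sigma (m n : Z) (p : pt) : pt := (m - 1 - fst p, snd p + n).
Definition sigma_inv (m n : Z) (p : pt) : pt := (m - 1 - fst p, snd p - n).

Inductive inG (m n : Z) : (pt -> pt) -> Prop :=
| inG_id : inG m n (fun p => p)
| inG_tau f : inG m n f -> inG m n (fun p => tau m n (f p))
| inG_tau_inv f : inG m n f -> inG m n (fun p => tau_inv m n (f p))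
| inG_sigma f : inG m n f -> inG m n (fun p => sigma m n (f p))
| inG_sigma_inv f : inG m n f -> inG m n (fun p => sigma_inv m n (f p)).

(** Two vertices of P have the same image in K_{m,n} (same G-orbit). *)
Definition same_vertex (m n : Z) (p q : pt) : Prop :=
  exists g, inG m n g /\ g p = q.

(** The edges {p,q} and {p',q'} of P have the same image in K_{m,n}
    (edges of K_{m,n} are G-orbits of (unordered) edges of P). *)
Definition same_edge (m n : Z) (p q p' q' : pt) : Prop :=
  exists g, inG m n g /\
    ((g p = p' /\ g q = q') \/ (g p = q' /\ g q = p')).

(** [tour_lift m n k w]: w 0, ..., w k is the lift to P (starting at (0,0))
    of a knight's tour of K_{m,n} of length k, i.e. of a Hamiltonian cycle
    v_0 e_1 v_1 ... e_k v_k = v_0 with v_i = phi(w i), e_i = phi({w (i-1), w i}):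
    - it starts at (0,0), consecutive points are knight-adjacent in P;
    - the edges used in K_{m,n} are pairwise distinct;
    - the vertices v_0,...,v_k are pairwise distinct except v_0 = v_k;
    - every vertex of K_{m,n} is visited.
    For k = 0 this is the trivial walk (a tour iff K_{m,n} has one vertex). *)
Definition tour_lift (m n : Z) (k : nat) (w : nat -> pt) : Prop :=
  w 0%nat = (0, 0) /\
  same_vertex m n (w 0%nat) (w k) /\
  (forall i : nat, (i < k)%nat -> knight_adj (w i) (w (S i))) /\
  (forall i j : nat, (i < j < k)%nat ->
       ~ same_edge m n (w i) (w (S i)) (w j) (w (S j))) /\
  (forall i j : nat, (i < j <= k)%nat ->
       same_vertex m n (w i) (w j) -> i = 0%nat /\ j = k) /\
  (forall p : pt, exists i : nat, (i <= k)%nat /\ same_vertex m n (w i) p).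

(** K_{m,n} admits a nullhomotopic knight's tour: some tour whose lift
    starting at (0,0) ends at (0,0). *)
Definition has_nullhomotopic_tour (m n : Z) : Prop :=
  exists (k : nat) (w : nat -> pt), tour_lift m n k w /\ w k = (0, 0).

(* Main.v *)
Require Import Defs.
From Stdlib Require Import ZArith Lia List Bool.
Import ListNotations.
Open Scope Z_scope.


Definition FF (m n t k : Z) (p : pt) : pt :=
  (if Z.even k then fst p + m * t else m - 1 - fst p + m * t, snd p + n * k).

Lemma inG_comp m n g1 g2 : inG m n g2 -> inG m n g1 -> inG m n (fun p => g2 (g1 p)).
Proof.
  intros H2 H1. induction H2.
  - exact H1.
  - apply inG_tau; auto.
  - apply inG_tau_inv; auto.
  - apply inG_sigma; auto.
  - apply inG_sigma_inv; auto.
Qed.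

Lemma inG_tau1 m n : inG m n (tau m n).
Proof. exact (inG_tau m n _ (inG_id m n)). Qed.
Lemma inG_tau_inv1 m n : inG m n (tau_inv m n).
Proof. exact (inG_tau_inv m n _ (inG_id m n)). Qed.
Lemma inG_sigma1 m n : inG m n (sigma m n).
Proof. exact (inG_sigma m n _ (inG_id m n)). Qed.
Lemma inG_sigma_inv1 m n : inG m n (sigma_inv m n).
Proof. exact (inG_sigma_inv m n _ (inG_id m n)). Qed.

Lemma sv_refl m n p : same_vertex m n p p.
Proof. exists (fun p => p). split; [constructor | reflexivity]. Qed.

Lemma sv_trans m n p q r : same_vertex m n p q -> same_vertex m n q r -> same_vertex m n p r.
Proof.
  intros [g1 [H1 E1]] [g2 [H2 E2]]. exists (fun x => g2 (g1 x)). split.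
  - apply inG_comp; auto.
  - simpl. rewrite E1. exact E2.
Qed.

Lemma sv_step m n g p : inG m n g -> same_vertex m n p (g p).
Proof. intros H. exists g. auto. Qed.

Lemma inG_inv m n g : inG m n g -> exists g', inG m n g' /\ forall p, g' (g p) = p.
Proof.
  intros H. induction H.
  - exists (fun p => p). split; [constructor | auto].
  - destruct IHinG as [g' [Hg' E]]. exists (fun p => g' (tau_inv m n p)).
    split. apply inG_comp; auto. apply inG_tau_inv1.
    intros p. rewrite <- (E p) at 2. f_equal. unfold tau, tau_inv. destruct (f p); simpl; f_equal; lia.
  - destruct IHinG as [g' [Hg' E]]. exists (fun p => g' (tau m n p)).
    split. apply inG_comp; auto. apply inG_tau1.
    intros p. rewrite <- (E p) at 2. f_equal. unfold tau, tau_inv. destruct (f p); simpl; f_equal; lia.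
  - destruct IHinG as [g' [Hg' E]]. exists (fun p => g' (sigma_inv m n p)).
    split. apply inG_comp; auto. apply inG_sigma_inv1.
    intros p. rewrite <- (E p) at 2. f_equal. unfold sigma, sigma_inv. destruct (f p); simpl; f_equal; lia.
  - destruct IHinG as [g' [Hg' E]]. exists (fun p => g' (sigma m n p)).
    split. apply inG_comp; auto. apply inG_sigma1.
    intros p. rewrite <- (E p) at 2. f_equal. unfold sigma, sigma_inv. destruct (f p); simpl; f_equal; lia.
Qed.

Lemma sv_sym m n p q : same_vertex m n p q -> same_vertex m n q p.
Proof.
  intros [g [H E]]. destruct (inG_inv m n g H) as [g' [H' E']].
  exists g'. split; auto. rewrite <- E. apply E'.
Qed.

Lemma sv_tau_nat m n (t : nat) p : same_vertex m n p (fst p + m * Z.of_nat t, snd p).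
Proof.
  induction t.
  - simpl. replace (fst p + m * 0) with (fst p) by lia. destruct p; apply sv_refl.
  - eapply sv_trans. apply IHt. eapply sv_trans. apply (sv_step m n (tau m n)). apply inG_tau1.
    unfold tau. simpl. replace (fst p + m * Z.of_nat t + m) with (fst p + m * Z.of_nat (S t)) by lia.
    apply sv_refl.
Qed.

Lemma sv_tau m n (t : Z) p : same_vertex m n p (fst p + m * t, snd p).
Proof.
  destruct (Z_le_gt_dec 0 t).
  - replace t with (Z.of_nat (Z.to_nat t)) by lia. apply sv_tau_nat.
  - apply sv_sym. set (q := (fst p + m * t, snd p)).
    replace p with (fst q + m * Z.of_nat (Z.to_nat (-t)), snd q).
    apply sv_tau_nat. subst q. destruct p; simpl. f_equal; lia.
Qed.

Lemma sv_sigma_nat m n (k : nat) p :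
  same_vertex m n p (if Z.even (Z.of_nat k) then fst p else m - 1 - fst p, snd p + n * Z.of_nat k).
Proof.
  induction k.
  - simpl. replace (snd p + n * 0) with (snd p) by lia. destruct p; apply sv_refl.
  - rewrite Nat2Z.inj_succ, Z.even_succ, <- Z.negb_even.
    eapply sv_trans. apply IHk. eapply sv_trans. apply (sv_step m n (sigma m n)). apply inG_sigma1.
    unfold sigma. destruct (Z.even (Z.of_nat k)); simpl.
    + replace (snd p + n * Z.of_nat k + n) with (snd p + n * Z.succ (Z.of_nat k)) by lia. apply sv_refl.
    + replace (m - 1 - (m - 1 - fst p)) with (fst p) by lia.
      replace (snd p + n * Z.of_nat k + n) with (snd p + n * Z.succ (Z.of_nat k)) by lia. apply sv_refl.
Qed.

Lemma sv_sigma m n (k : Z) p :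
  same_vertex m n p (if Z.even k then fst p else m - 1 - fst p, snd p + n * k).
Proof.
  destruct (Z_le_gt_dec 0 k).
  - replace k with (Z.of_nat (Z.to_nat k)) by lia. apply sv_sigma_nat.
  - apply sv_sym. set (q := (if Z.even k then fst p else m - 1 - fst p, snd p + n * k)).
    assert (Hk : Z.even k = Z.even (Z.of_nat (Z.to_nat (-k)))).
    { replace (Z.of_nat (Z.to_nat (-k))) with (-k) by lia. now rewrite Z.even_opp. }
    replace p with (if Z.even (Z.of_nat (Z.to_nat (-k))) then fst q else m - 1 - fst q,
                    snd q + n * Z.of_nat (Z.to_nat (-k))).
    apply sv_sigma_nat. subst q. rewrite <- Hk. destruct p; simpl.
    destruct (Z.even k); simpl; f_equal; lia.
Qed.

Lemma sv_FF m n t k p : same_vertex m n p (FF m n t k p).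
Proof.
  eapply sv_trans. apply (sv_sigma m n k). unfold FF.
  set (q := (if Z.even k then fst p else m - 1 - fst p, snd p + n * k)).
  eapply sv_trans. apply (sv_tau m n t q). subst q. simpl.
  destruct (Z.even k); apply sv_refl.
Qed.

Lemma sv_intro m n a b a' b' t k :
  (Z.even k = true -> a' = a + m * t) ->
  (Z.even k = false -> a' = m - 1 - a + m * t) ->
  b' = b + n * k -> same_vertex m n (a, b) (a', b').
Proof.
  intros H1 H2 H3. replace (a', b') with (FF m n t k (a, b)). apply sv_FF.
  unfold FF; simpl. subst b'. destruct (Z.even k); [rewrite H1 | rewrite H2]; auto.
Qed.

Definition canon (m n : Z) (p : pt) : pt :=
  (if Z.even (snd p / n) then fst p mod m else (m - 1 - fst p) mod m, snd p mod n).

Lemma canon_gen m n p g : 0 < m -> 0 < n ->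
  (g = tau m n \/ g = tau_inv m n \/ g = sigma m n \/ g = sigma_inv m n) -> canon m n (g p) = canon m n p.
Proof.
  intros Hm Hn [E|[E|[E|E]]]; subst g; destruct p as [a b]; unfold canon, tau, tau_inv, sigma, sigma_inv; simpl.
  - destruct (Z.even (b / n)); f_equal.
    + replace (a + m) with (a + 1 * m) by lia. apply Z_mod_plus_full.
    + replace (m - 1 - (a + m)) with (m - 1 - a + (-1) * m) by lia. apply Z_mod_plus_full.
  - destruct (Z.even (b / n)); f_equal.
    + replace (a - m) with (a + (-1) * m) by lia. apply Z_mod_plus_full.
    + replace (m - 1 - (a - m)) with (m - 1 - a + 1 * m) by lia. apply Z_mod_plus_full.
  - replace (b + n) with (b + 1 * n) by lia. rewrite Z_div_plus_full, Z_mod_plus_full by lia.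
    rewrite Z.even_add. simpl. destruct (Z.even (b / n)); simpl; f_equal; f_equal; lia.
  - replace (b - n) with (b + (-1) * n) by lia. rewrite Z_div_plus_full, Z_mod_plus_full by lia.
    rewrite Z.even_add. simpl. destruct (Z.even (b / n)); simpl; f_equal; f_equal; lia.
Qed.

Lemma canon_inG m n g p : 0 < m -> 0 < n -> inG m n g -> canon m n (g p) = canon m n p.
Proof.
  intros Hm Hn H. induction H; auto.
  - rewrite (canon_gen m n (f p) (tau m n)); auto.
  - rewrite (canon_gen m n (f p) (tau_inv m n)); auto.
  - rewrite (canon_gen m n (f p) (sigma m n)); auto.
  - rewrite (canon_gen m n (f p) (sigma_inv m n)); auto.
Qed.

Lemma sv_canon m n p q : 0 < m -> 0 < n -> same_vertex m n p q -> canon m n p = canon m n q.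
Proof. intros Hm Hn [g [H E]]. subst q. symmetry. apply canon_inG; auto. Qed.

Lemma sv_to_canon m n p : 0 < m -> 0 < n -> same_vertex m n p (canon m n p).
Proof.
  intros Hm Hn. destruct p as [a b]. unfold canon; simpl.
  pose proof (Z.div_mod b n ltac:(lia)) as Eb.
  pose proof (Z.div_mod a m ltac:(lia)) as Ea.
  pose proof (Z.div_mod (m - 1 - a) m ltac:(lia)) as Ea'.
  destruct (Z.even (b / n)) eqn:He.
  - apply (sv_intro m n a b _ _ (- (a / m)) (- (b / n))).
    + intros _. lia.
    + rewrite Z.even_opp, He. discriminate.
    + lia.
  - apply (sv_intro m n a b _ _ (- ((m - 1 - a) / m)) (- (b / n))).
    + rewrite Z.even_opp, He. discriminate.
    + intros _. lia.
    + lia.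
Qed.

Lemma canon_sv m n p q : 0 < m -> 0 < n -> canon m n p = canon m n q -> same_vertex m n p q.
Proof.
  intros Hm Hn E. eapply sv_trans. apply sv_to_canon; auto. rewrite E.
  apply sv_sym, sv_to_canon; auto.
Qed.

Lemma canon_range m n p : 0 < m -> 0 < n ->
  0 <= fst (canon m n p) < m /\ 0 <= snd (canon m n p) < n.
Proof.
  intros Hm Hn. unfold canon. simpl. split.
  - destruct (Z.even _); apply Z.mod_pos_bound; lia.
  - apply Z.mod_pos_bound; lia.
Qed.


Fixpoint chain (l : list pt) : Prop :=
  match l with
  | x :: l' => match l' with y :: _ => knight_adj x y /\ chain l' | nil => True end
  | nil => True
  end.

Lemma chain_nth L i : chain L -> (S i < length L)%nat ->
  knight_adj (nth i L (0,0)) (nth (S i) L (0,0)).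
Proof.
  revert i. induction L as [|x L IH]; intros i HL Hi; simpl in *; [lia|].
  destruct L as [|y L']; simpl in *; [lia|].
  destruct HL as [H1 H2]. destruct i; auto.
  apply (IH i); simpl; auto; lia.
Qed.

Lemma nth_last_len (L : list pt) d : L <> nil -> nth (length L - 1) L d = last L d.
Proof.
  induction L as [|x L IH]; intros H; [congruence|].
  destruct L as [|y L']; [reflexivity|]. specialize (IH ltac:(discriminate)).
  change (nth (length (y :: L')) (x :: y :: L') d = last (y :: L') d).
  rewrite <- IH. simpl. rewrite Nat.sub_0_r. reflexivity.
Qed.

Definition zl (k : Z) : list Z := map Z.of_nat (seq 0 (Z.to_nat k)).

Lemma in_zl k x : In x (zl k) <-> 0 <= x < k.
Proof.
  unfold zl. rewrite in_map_iff. split.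
  - intros [i [<- Hi]]. apply in_seq in Hi. lia.
  - intros H. exists (Z.to_nat x). rewrite in_seq. split; lia.
Qed.

Lemma NoDup_zl k : NoDup (zl k).
Proof.
  unfold zl. apply NoDup_map_NoDup_ForallPairs.
  - intros a b _ _ E. lia.
  - apply seq_NoDup.
Qed.

Lemma length_zl k : length (zl k) = Z.to_nat k.
Proof. unfold zl. rewrite length_map, length_seq. auto. Qed.

Lemma NoDup_prod {A B : Type} (l : list A) (l' : list B) :
  NoDup l -> NoDup l' -> NoDup (list_prod l l').
Proof.
  intros H1 H2. induction H1 as [|a l Ha Hl IH]; simpl; [constructor|].
  apply NoDup_app; auto.
  - apply NoDup_map_NoDup_ForallPairs; auto. intros x y _ _ E. congruence.
  - intros [x y] H3 H4. apply in_map_iff in H3. destruct H3 as [z [E _]]. inversion E; subst.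
    apply in_prod_iff in H4. tauto.
Qed.

Definition rect (m n : Z) : list pt := list_prod (zl m) (zl n).

Lemma in_rect m n x y : In (x, y) (rect m n) <-> (0 <= x < m /\ 0 <= y < n).
Proof. unfold rect. rewrite in_prod_iff, !in_zl. tauto. Qed.

Lemma length_rect m n : 0 <= m -> 0 <= n -> Z.of_nat (length (rect m n)) = m * n.
Proof. intros. unfold rect, pt. rewrite length_prod, !length_zl. lia. Qed.

Lemma canon_id m n x y : 0 <= x < m -> 0 <= y < n -> canon m n (x, y) = (x, y).
Proof.
  intros Hx Hy. unfold canon; simpl. rewrite Z.div_small by lia. simpl.
  rewrite !Z.mod_small by lia. auto.
Qed.

Definition cover (m n : Z) (L : list pt) : Prop :=
  forall x y, 0 <= x < m -> 0 <= y < n -> exists q, In q L /\ same_vertex m n q (x, y).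

Lemma tour_of_list m n (L : list pt) : 0 < m -> 0 < n -> hd (0,0) L = (0,0) -> L <> nil -> chain L ->
  knight_adj (last L (0,0)) (0,0) -> Z.of_nat (length L) = m * n -> 3 <= m * n ->
  cover m n L -> has_nullhomotopic_tour m n.
Proof.
  intros Hm Hn Hhd Hne Hch Hlast Hlen H3 Hcov.
  set (k := length L). set (w := fun i => nth i L (0,0)).
  assert (Hw0 : w 0%nat = (0,0)) by (unfold w; destruct L; simpl in *; congruence).
  assert (Hwk : w k = (0,0)) by (unfold w, k; apply nth_overflow; lia).
  assert (HND : NoDup (map (canon m n) L)).
  { apply (NoDup_incl_NoDup (l := rect m n)).
    - unfold rect. apply NoDup_prod; apply NoDup_zl.
    - rewrite length_map. pose proof (length_rect m n ltac:(lia) ltac:(lia)). lia.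
    - intros [x y] Hxy. apply in_rect in Hxy. destruct (Hcov x y) as [q [Hq Hsv]]; try tauto.
      apply in_map_iff. exists q. split; auto. rewrite (sv_canon m n q (x,y)); auto.
      apply canon_id; tauto. }
  assert (Hinj : forall i j, (i < k)%nat -> (j < k)%nat -> same_vertex m n (w i) (w j) -> i = j).
  { intros i j Hi Hj Hsv. apply sv_canon in Hsv; auto.
    apply (proj1 (NoDup_nth (map (canon m n) L) (canon m n (0,0))) HND); rewrite ?length_map; auto.
    rewrite !map_nth. exact Hsv. }
  assert (Hk3 : (3 <= k)%nat) by lia.
  exists k, w. split; [|exact Hwk].
  unfold tour_lift. split; [exact Hw0|]. split.
  { rewrite Hw0, Hwk. apply sv_refl. }
  split.
  { intros i Hi. destruct (Nat.eq_dec (S i) k) as [E|E].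
    - rewrite E, Hwk. unfold w. replace i with (length L - 1)%nat by (unfold k in E; lia).
      rewrite nth_last_len; auto.
    - apply chain_nth; auto. unfold k in *; lia. }
  split.
  { intros i j [Hij Hjk] [g [Hg Hcase]].
    destruct Hcase as [[E1 E2]|[E1 E2]].
    - assert (i = j). { apply Hinj; try lia. exists g; auto. } lia.
    - destruct (Nat.eq_dec (S i) j) as [Ej|Ej].
      + subst j. destruct (Nat.eq_dec (S (S i)) k) as [Ek|Ek].
        * rewrite Ek, Hwk, <- Hw0 in E1.
          assert (i = 0%nat). { apply Hinj; try lia. exists g; auto. } lia.
        * assert (i = S (S i)). { apply Hinj; try lia. exists g; auto. } lia.
      + assert (S i = j). { apply Hinj; try lia. exists g; auto. } lia. }
  split.
  { intros i j [Hij Hjk] Hsv. destruct (Nat.eq_dec j k) as [Ej|Ej].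
    - subst j. rewrite Hwk, <- Hw0 in Hsv. split; auto. apply Hinj; auto; lia.
    - assert (i = j) by (apply Hinj; auto; lia). lia. }
  { intros p. destruct (canon_range m n p Hm Hn) as [Hx Hy].
    destruct (Hcov _ _ Hx Hy) as [q [Hq Hsv]].
    destruct (In_nth L q (0,0) Hq) as [i [Hi Ei]].
    exists i. split; [unfold k; lia|]. unfold w. rewrite Ei.
    eapply sv_trans. exact Hsv. rewrite <- surjective_pairing. apply sv_sym, sv_to_canon; auto. }
Qed.


Definition moves : list pt := [(1,2);(2,1);(-1,2);(-2,1);(1,-2);(2,-1);(-1,-2);(-2,-1)].
Definition padd (p d : pt) : pt := (fst p + fst d, snd p + snd d).
Definition Zpeq (p q : pt) : bool := (fst p =? fst q) && (snd p =? snd q).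

Lemma Zpeq_true p q : Zpeq p q = true <-> p = q.
Proof.
  destruct p, q; unfold Zpeq; simpl. rewrite andb_true_iff, !Z.eqb_eq. split.
  - intros [-> ->]; auto.
  - intros E; inversion E; auto.
Qed.

Lemma knight_moves p q : knight_adj p q -> In (fst q - fst p, snd q - snd p) moves.
Proof.
  unfold knight_adj. intros H.
  assert (Hc : (fst q - fst p = 1 \/ fst q - fst p = -1) /\ (snd q - snd p = 2 \/ snd q - snd p = -2) \/
               (fst q - fst p = 2 \/ fst q - fst p = -2) /\ (snd q - snd p = 1 \/ snd q - snd p = -1)) by lia.
  destruct Hc as [[[E1|E1] [E2|E2]]|[[E1|E1] [E2|E2]]]; rewrite E1, E2; simpl; tauto.
Qed.

Lemma knight_parity p q : knight_adj p q -> Z.even (fst q + snd q) = negb (Z.even (fst p + snd p)).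
Proof.
  unfold knight_adj. intros H.
  assert (Hc : fst q + snd q = fst p + snd p + 1 \/ fst q + snd q = fst p + snd p + -1 \/
               fst q + snd q = fst p + snd p + 3 \/ fst q + snd q = fst p + snd p + -3) by lia.
  destruct Hc as [E|[E|[E|E]]]; rewrite E; rewrite (Z.even_add (fst p + snd p)); simpl;
    destruct (Z.even (fst p + snd p)); reflexivity.
Qed.

Lemma tour_parity m n k w : tour_lift m n k w ->
  forall i, (i <= k)%nat -> Z.even (fst (w i) + snd (w i)) = Nat.even i.
Proof.
  intros [H0 [_ [Hadj _]]] i. induction i; intros Hi.
  - rewrite H0. reflexivity.
  - rewrite (knight_parity (w i) (w (S i))) by (apply Hadj; lia).
    rewrite IHi by lia. rewrite Nat.even_succ, <- Nat.negb_even. reflexivity.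
Qed.

Lemma tour_length m n k w : 0 < m -> 0 < n -> tour_lift m n k w -> (1 <= k)%nat ->
  Z.of_nat k = m * n.
Proof.
  intros Hm Hn Ht Hk. destruct Ht as [H0 [Hsk [Hadj [Hedge [Hvert Hcov]]]]].
  set (C := map (fun i => canon m n (w i)) (seq 0 k)).
  assert (HND : NoDup C).
  { apply NoDup_map_NoDup_ForallPairs; [|apply seq_NoDup].
    intros i j Hi Hj E. apply in_seq in Hi. apply in_seq in Hj.
    destruct (Nat.lt_total i j) as [L|[L|L]]; auto.
    - apply canon_sv in E; auto. destruct (Hvert i j) as [_ ?]; auto; lia.
    - symmetry in E. apply canon_sv in E; auto. destruct (Hvert j i) as [_ ?]; auto; lia. }
  assert (H1 : (length C <= length (rect m n))%nat).
  { apply NoDup_incl_length; auto. intros [x y] Hxy. unfold C in Hxy.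
    apply in_map_iff in Hxy. destruct Hxy as [i [E _]]. apply in_rect.
    pose proof (canon_range m n (w i) Hm Hn). rewrite E in H. simpl in H. auto. }
  assert (H2 : (length (rect m n) <= length C)%nat).
  { apply NoDup_incl_length. unfold rect; apply NoDup_prod; apply NoDup_zl.
    intros [x y] Hxy. apply in_rect in Hxy. destruct (Hcov (x,y)) as [i [Hi Hsv]].
    unfold C. apply in_map_iff.
    destruct (Nat.eq_dec i k) as [Ei|Ei].
    - exists 0%nat. split; [|apply in_seq; lia].
      subst i. assert (same_vertex m n (w 0%nat) (x,y)) by (eapply sv_trans; eauto).
      rewrite (sv_canon m n _ _ Hm Hn H). apply canon_id; tauto.
    - exists i. split; [|apply in_seq; lia].
      rewrite (sv_canon m n _ _ Hm Hn Hsv). apply canon_id; tauto. }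
  pose proof (length_rect m n ltac:(lia) ltac:(lia)).
  unfold C in *. rewrite length_map, length_seq in *. lia.
Qed.

Lemma tour_k0 m n w : 0 < m -> 0 < n -> tour_lift m n 0 w -> m * n = 1.
Proof.
  intros Hm Hn [_ [_ [_ [_ [_ Hcov]]]]].
  assert (Hall : forall x y, 0 <= x < m -> 0 <= y < n -> (x, y) = canon m n (w 0%nat)).
  { intros x y Hx Hy. destruct (Hcov (x,y)) as [i [Hi Hsv]]. assert (i = 0%nat) by lia. subst.
    rewrite (sv_canon m n _ _ Hm Hn Hsv). symmetry; apply canon_id; auto. }
  destruct (Z.eq_dec m 1); destruct (Z.eq_dec n 1); try lia.
  - assert (E := Hall 0 1). rewrite <- (Hall 0 0) in E by lia. specialize (E ltac:(lia) ltac:(lia)). congruence.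
  - assert (E := Hall 1 0). rewrite <- (Hall 0 0) in E by lia. specialize (E ltac:(lia) ltac:(lia)). congruence.
  - assert (E := Hall 1 0). rewrite <- (Hall 0 0) in E by lia. specialize (E ltac:(lia) ltac:(lia)). congruence.
Qed.

Definition nodup4 (a b c d : pt) : bool :=
  negb (Zpeq a b) && negb (Zpeq a c) && negb (Zpeq a d) && negb (Zpeq b c) && negb (Zpeq b d) && negb (Zpeq c d).

Definition test22 : bool :=
  forallb (fun d1 => forallb (fun d2 => forallb (fun d3 =>
    let w1 := d1 in let w2 := padd w1 d2 in let w3 := padd w2 d3 in
    negb (existsb (fun d => Zpeq (padd w3 d) (0,0)) moves &&
          nodup4 (canon 2 2 (0,0)) (canon 2 2 w1) (canon 2 2 w2) (canon 2 2 w3))) moves) moves) moves.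

Lemma test22_ok : test22 = true.
Proof. vm_compute. reflexivity. Qed.

Lemma Zpeq_false p q : p <> q -> Zpeq p q = false.
Proof. intros H. destruct (Zpeq p q) eqn:E; auto. apply Zpeq_true in E. congruence. Qed.

Lemma padd_diff p q : q = padd p (fst q - fst p, snd q - snd p).
Proof. destruct p, q; unfold padd; simpl; f_equal; lia. Qed.

Theorem necessity m n : 0 < m -> 0 < n -> has_nullhomotopic_tour m n ->
  ~ ( (Z.odd m = true /\ Z.odd n = true /\ (1 < m \/ 1 < n)) \/
      (m <= 2 /\ n <= 2 /\ (1 < m \/ 1 < n)) ).
Proof.
  intros Hm Hn [k [w [Ht Hwk]]] Hex.
  destruct (Nat.eq_dec k 0) as [Ek|Ek].
  { subst k. pose proof (tour_k0 m n w Hm Hn Ht). nia. }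
  pose proof (tour_length m n k w Hm Hn Ht ltac:(lia)) as Hlen.
  pose proof (tour_parity m n k w Ht k (le_n _)) as Hpar. rewrite Hwk in Hpar. simpl in Hpar.
  destruct Hex as [[Ho1 [Ho2 _]]|[H1 [H2 H3]]].
  - assert (Hodd : Z.odd (m * n) = true) by (rewrite Z.odd_mul, Ho1, Ho2; auto).
    rewrite <- Hlen in Hodd. rewrite <- Z.negb_even in Hodd.
    replace (Z.even (Z.of_nat k)) with (Nat.even k) in Hodd.
    + rewrite <- Hpar in Hodd. discriminate.
    + rewrite <- (Nat2Z.id k) at 1. destruct (Z.even (Z.of_nat k)) eqn:E.
      * apply Z.even_spec in E. destruct E as [x Ex]. rewrite Ex. replace (Z.to_nat (2 * x)) with (2 * Z.to_nat x)%nat by lia.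
        apply Nat.even_mul.
      * rewrite <- Z.negb_odd in E. apply negb_false_iff in E. apply Z.odd_spec in E. destruct E as [x Ex]. rewrite Ex.
        replace (Z.to_nat (2 * x + 1)) with (S (2 * Z.to_nat x))%nat by lia.
        rewrite Nat.even_succ, Nat.odd_mul. reflexivity.
  - destruct Ht as [H0 [Hsk [Hadj [Hedge [Hvert Hcov]]]]].
    assert (Hmn : m * n = 2 \/ m * n = 4) by nia.
    destruct Hmn as [E|E].
    + assert (k = 2%nat) by lia. subst k.
      apply (Hedge 0%nat 1%nat ltac:(lia)). exists (fun p => p). split; [constructor|].
      right. rewrite H0, Hwk. auto.
    + assert (k = 4%nat) by lia. subst k. assert (m = 2) by nia. assert (n = 2) by nia. subst m n.
      assert (Hd : forall i j, (i < j < 4)%nat -> Zpeq (canon 2 2 (w i)) (canon 2 2 (w j)) = false).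
      { intros i j Hij. apply Zpeq_false. intros E'. apply canon_sv in E'; try lia.
        destruct (Hvert i j) as [_ ?]; auto; lia. }
      pose proof (knight_moves _ _ (Hadj 0%nat ltac:(lia))) as M1.
      pose proof (knight_moves _ _ (Hadj 1%nat ltac:(lia))) as M2.
      pose proof (knight_moves _ _ (Hadj 2%nat ltac:(lia))) as M3.
      pose proof (knight_moves _ _ (Hadj 3%nat ltac:(lia))) as M4.
      pose proof test22_ok as T. unfold test22 in T.
      rewrite forallb_forall in T. specialize (T _ M1).
      rewrite forallb_forall in T. specialize (T _ M2).
      rewrite forallb_forall in T. specialize (T _ M3).
      assert (E1 : (fst (w 1%nat) - fst (w 0%nat), snd (w 1%nat) - snd (w 0%nat)) = w 1%nat)
        by (rewrite H0; destruct (w 1%nat); simpl; f_equal; lia).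
      cbv beta zeta in T.
      rewrite E1, <- (padd_diff (w 1%nat) (w 2%nat)), <- (padd_diff (w 2%nat) (w 3%nat)) in T.
      assert (Hex : existsb (fun d => Zpeq (padd (w 3%nat) d) (0,0)) moves = true).
      { apply existsb_exists. eexists. split. exact M4. apply Zpeq_true. rewrite Hwk.
        destruct (w 3%nat); unfold padd; simpl; f_equal; lia. }
      rewrite Hex in T. unfold nodup4 in T.
      rewrite <- H0 in T.
      rewrite (Hd 0 1)%nat, (Hd 0 2)%nat, (Hd 0 3)%nat, (Hd 1 2)%nat, (Hd 1 3)%nat, (Hd 2 3)%nat in T by lia.
      discriminate.
Qed.


Definition z0 : pt := (0,0).

Lemma knight_sym p q : knight_adj p q -> knight_adj q p.
Proof. unfold knight_adj. lia. Qed.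

Lemma knight_padd p q t : knight_adj p q -> knight_adj (padd p t) (padd q t).
Proof. unfold knight_adj, padd. simpl. intros H. replace (fst p + fst t - (fst q + fst t)) with (fst p - fst q) by lia.
  replace (snd p + snd t - (snd q + snd t)) with (snd p - snd q) by lia. exact H. Qed.

Definition shv (t : pt) (L : list pt) : list pt := map (fun p => padd p t) L.
Definition sh (d : Z) (L : list pt) : list pt := shv (d, 0) L.

Lemma chain_cons2 x y l : chain (x :: y :: l) <-> knight_adj x y /\ chain (y :: l).
Proof. simpl. tauto. Qed.

Lemma chain_app l1 l2 : chain l1 -> chain l2 ->
  (l1 = [] \/ l2 = [] \/ knight_adj (last l1 z0) (hd z0 l2)) -> chain (l1 ++ l2).
Proof.
  induction l1 as [|x l1 IH]; intros H1 H2 H3; simpl; auto.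
  destruct l1 as [|y l1'].
  - simpl. destruct l2 as [|z l2']; auto. destruct H3 as [H3|[H3|H3]]; try discriminate. split; auto.
  - destruct H1 as [Hxy H1]. split; auto. apply IH; auto.
    destruct H3 as [H3|[H3|H3]]; try discriminate; auto.
Qed.

Lemma chain_app_l l1 l2 : chain (l1 ++ l2) -> chain l1.
Proof.
  induction l1 as [|x l1 IH]; [simpl; auto|].
  destruct l1 as [|y l1']; [simpl; auto|]. intros H. simpl in H. destruct H as [H1 H2].
  split; auto.
Qed.

Lemma chain_app_r l1 l2 : chain (l1 ++ l2) -> chain l2.
Proof.
  induction l1 as [|x l1 IH]; simpl; auto.
  intros H. apply IH. destruct l1; simpl in *; [destruct l2; simpl; tauto | tauto].
Qed.

Lemma last_app l1 l2 (d : pt) : l2 <> [] -> last (l1 ++ l2) d = last l2 d.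
Proof.
  induction l1 as [|x l1 IH]; intros H; simpl; auto.
  rewrite <- IH by auto. destruct (l1 ++ l2) eqn:E; auto.
  apply app_eq_nil in E. tauto.
Qed.

Lemma hd_app l1 l2 (d : pt) : l1 <> [] -> hd d (l1 ++ l2) = hd d l1.
Proof. destruct l1; simpl; auto. congruence. Qed.

Lemma last_cons x l (d : pt) : l <> [] -> last (x :: l) d = last l d.
Proof. destruct l; simpl; auto. congruence. Qed.

Lemma chain_rev l : chain l -> chain (rev l).
Proof.
  induction l as [|x l IH]; simpl; auto. intros H.
  apply chain_app.
  - apply IH. destruct l; simpl in *; tauto.
  - simpl; auto.
  - destruct l as [|y l']; [left; auto|]. right; right.
    destruct H as [H _]. simpl. rewrite last_app by discriminate. simpl. apply knight_sym; auto.
Qed.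

Lemma hd_rev l : l <> [] -> hd z0 (rev l) = last l z0.
Proof.
  induction l as [|x l IH]; intros H; [congruence|]. simpl.
  destruct l as [|y l']; simpl; auto.
  rewrite hd_app. apply IH; discriminate. intros E. apply (f_equal (@length pt)) in E.
  rewrite length_app, length_rev in E. simpl in E. lia.
Qed.

Lemma last_rev l : l <> [] -> last (rev l) z0 = hd z0 l.
Proof. destruct l as [|x l]; [congruence|]. intros _. simpl. rewrite last_app by discriminate. auto. Qed.

Lemma chain_shv t l : chain l -> chain (shv t l).
Proof.
  induction l as [|x l IH]; simpl; auto. destruct l as [|y l']; simpl; auto.
  intros [H1 H2]. split. apply knight_padd; auto. apply IH; auto.
Qed.

Lemma hd_shv t l : l <> [] -> hd z0 (shv t l) = padd (hd z0 l) t.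
Proof. destruct l; simpl; congruence. Qed.

Lemma last_shv t l : l <> [] -> last (shv t l) z0 = padd (last l z0) t.
Proof.
  induction l as [|x l IH]; intros H; [congruence|].
  destruct l as [|y l']; simpl; auto. simpl in IH. apply IH. discriminate.
Qed.

Lemma shv_nil t l : l <> [] -> shv t l <> [].
Proof. destruct l; simpl; congruence. Qed.

Lemma rev_nil (l : list pt) : l <> [] -> rev l <> [].
Proof. intros H E. apply H. rewrite <- (rev_involutive l), E. auto. Qed.

Lemma app_nil_l' (l1 l2 : list pt) : l2 <> [] -> l1 ++ l2 <> [].
Proof. intros H E. apply app_eq_nil in E. tauto. Qed.

Definition helical (D : Z) (L : list pt) : Prop :=
  L <> [] /\ chain L /\ knight_adj (last L z0) (padd (hd z0 L) (D, 0)).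

Lemma padd_assoc p s t : padd (padd p s) t = padd p (padd s t).
Proof. destruct p, s, t; unfold padd; simpl; f_equal; lia. Qed.

Lemma helical_shv D t L : helical D L -> helical D (shv t L).
Proof.
  intros [H1 [H2 H3]]. split; [apply shv_nil; auto|]. split; [apply chain_shv; auto|].
  rewrite last_shv, hd_shv by auto. rewrite padd_assoc.
  replace (padd t (D, 0)) with (padd (D, 0) t) by (destruct t; unfold padd; simpl; f_equal; lia).
  rewrite <- padd_assoc. apply knight_padd; auto.
Qed.

Definition closedL (L : list pt) : Prop := L <> [] /\ chain L /\ knight_adj (last L z0) (hd z0 L).

Lemma merge_closed D X1 Y1 X2 Y2 :
  helical D (X1 ++ Y1) -> helical D (X2 ++ Y2) ->
  X1 <> [] -> Y1 <> [] -> X2 <> [] -> Y2 <> [] ->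
  knight_adj (last X1 z0) (last X2 z0) -> knight_adj (hd z0 Y1) (hd z0 Y2) ->
  closedL (Y1 ++ sh D X1 ++ sh D (rev X2) ++ rev Y2).
Proof.
  intros [_ [C1 K1]] [_ [C2 K2]] HX1 HY1 HX2 HY2 Ha Hb.
  rewrite last_app in K1, K2 by auto. rewrite hd_app in K1, K2 by auto.
  assert (HrX2 := rev_nil X2 HX2). assert (HrY2 := rev_nil Y2 HY2).
  assert (N1 : sh D X1 <> []) by (apply shv_nil; auto).
  assert (N2 : sh D (rev X2) <> []) by (apply shv_nil; auto).
  assert (E1 : hd z0 (sh D X1) = padd (hd z0 X1) (D,0)) by (apply hd_shv; auto).
  assert (E2 : last (sh D X1) z0 = padd (last X1 z0) (D,0)) by (apply last_shv; auto).
  assert (E3 : hd z0 (sh D (rev X2)) = padd (last X2 z0) (D,0))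
    by (unfold sh; rewrite hd_shv, hd_rev; auto).
  assert (E4 : last (sh D (rev X2)) z0 = padd (hd z0 X2) (D,0))
    by (unfold sh; rewrite last_shv, last_rev; auto).
  assert (E5 : hd z0 (rev Y2) = last Y2 z0) by (apply hd_rev; auto).
  assert (E6 : last (rev Y2) z0 = hd z0 Y2) by (apply last_rev; auto).
  assert (CY1 : chain Y1) by (eapply chain_app_r; eauto).
  assert (CX1 : chain (sh D X1)) by (apply chain_shv; eapply chain_app_l; eauto).
  assert (CX2 : chain (sh D (rev X2))) by (apply chain_shv, chain_rev; eapply chain_app_l; eauto).
  assert (CY2 : chain (rev Y2)) by (apply chain_rev; eapply chain_app_r; eauto).
  split; [apply app_nil_l'; apply app_nil_l'; apply app_nil_l'; auto|].
  split.
  - apply chain_app; auto.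
    + apply chain_app; auto.
      * apply chain_app; auto. right; right. rewrite E4, E5. apply knight_sym; auto.
      * right; right. rewrite hd_app by auto. rewrite E2, E3. apply knight_padd; auto.
    + right; right. rewrite hd_app by auto. rewrite E1. auto.
  - rewrite hd_app by auto. rewrite !last_app by (auto; repeat apply app_nil_l'; auto).
    rewrite E6. apply knight_sym; auto.
Qed.

Lemma chain_junction l1 l2 : chain (l1 ++ l2) -> l1 <> [] -> l2 <> [] ->
  knight_adj (last l1 z0) (hd z0 l2).
Proof.
  induction l1 as [|x l1 IH]; intros H H1 H2; [congruence|].
  destruct l1 as [|y l1'].
  - destruct l2 as [|z l2']; [congruence|]. simpl in H. simpl. tauto.
  - rewrite last_cons by discriminate. apply IH; auto; [|discriminate].
    simpl in H. simpl. tauto.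
Qed.

Lemma closed_rot U V : closedL (U ++ V) -> V <> [] -> closedL (V ++ U).
Proof.
  intros [H1 [H2 H3]] HV. destruct U as [|u U'].
  - rewrite app_nil_r. simpl in *. split; auto.
  - assert (HU : u :: U' <> []) by discriminate.
    split; [apply app_nil_l'; discriminate|]. split.
    + apply chain_app; [eapply chain_app_r; eauto|eapply chain_app_l; eauto|].
      right; right. rewrite last_app in H3 by auto. rewrite hd_app in H3 by auto. exact H3.
    + rewrite hd_app by auto. rewrite last_app by auto. apply chain_junction; auto.
Qed.

Lemma closed_shv t L : closedL L -> closedL (shv t L).
Proof.
  intros [H1 [H2 H3]]. split; [apply shv_nil; auto|]. split; [apply chain_shv; auto|].
  rewrite last_shv, hd_shv by auto. apply knight_padd; auto.
Qed.

Fixpoint hel (slots : list pt) (s : Z) (k : nat) : list pt :=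
  match k with O => [] | S k' => slots ++ sh s (hel slots s k') end.

Lemma hel_nil slots s k : slots <> [] -> hel slots s (S k) <> [].
Proof. intros H. simpl. intros E. apply app_eq_nil in E. tauto. Qed.

Lemma hel_hd slots s k : slots <> [] -> hd z0 (hel slots s (S k)) = hd z0 slots.
Proof. intros H. simpl. apply hd_app; auto. Qed.

Lemma hel_last slots s k : slots <> [] ->
  last (hel slots s (S k)) z0 = padd (last slots z0) (Z.of_nat k * s, 0).
Proof.
  intros H. induction k.
  - simpl. rewrite app_nil_r. destruct (last slots z0); unfold padd; simpl; f_equal; nia.
  - change (hel slots s (S (S k))) with (slots ++ sh s (hel slots s (S k))).
    rewrite last_app by (apply shv_nil, hel_nil; auto). unfold sh. rewrite last_shv by (apply hel_nil; auto).
    rewrite IHk. rewrite padd_assoc. f_equal. unfold padd; cbn [fst snd]. rewrite Nat2Z.inj_succ. f_equal; ring.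
Qed.

Lemma hel_helical slots s k : slots <> [] -> chain slots ->
  knight_adj (last slots z0) (padd (hd z0 slots) (s, 0)) ->
  helical (Z.of_nat (S k) * s) (hel slots s (S k)).
Proof.
  intros Hne Hc Ht. split; [apply hel_nil; auto|]. split.
  - induction k.
    + simpl. rewrite app_nil_r; auto.
    + change (hel slots s (S (S k))) with (slots ++ sh s (hel slots s (S k))).
      apply chain_app; auto. apply chain_shv; auto.
      right; right. unfold sh. rewrite hd_shv, hel_hd by (try apply hel_nil; auto). exact Ht.
  - rewrite hel_last, hel_hd by auto.
    replace (padd (hd z0 slots) (Z.of_nat (S k) * s, 0)) with
      (padd (padd (hd z0 slots) (s, 0)) (Z.of_nat k * s, 0))
      by (rewrite padd_assoc; f_equal; unfold padd; cbn [fst snd]; rewrite Nat2Z.inj_succ; f_equal; ring).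
    apply knight_padd; auto.
Qed.

Lemma in_hel slots s k q j : In q slots -> (j < k)%nat -> In (padd q (Z.of_nat j * s, 0)) (hel slots s k).
Proof.
  revert j. induction k; intros j Hq Hj; [lia|]. simpl. apply in_or_app.
  destruct j.
  - left. replace (padd q (Z.of_nat 0 * s, 0)) with q; auto. destruct q; unfold padd; cbn [fst snd]; f_equal; ring.
  - right. unfold sh, shv. apply in_map_iff. exists (padd q (Z.of_nat j * s, 0)). split.
    + rewrite padd_assoc. f_equal. unfold padd; cbn [fst snd]. rewrite Nat2Z.inj_succ. f_equal; ring.
    + apply IHk; auto; lia.
Qed.

Lemma hel_rows slots s k (R : Z -> Prop) : (forall q, In q slots -> R (snd q)) ->
  forall p, In p (hel slots s k) -> R (snd p).
Proof.
  induction k; simpl; intros H p Hp; [tauto|]. apply in_app_or in Hp. destruct Hp as [Hp|Hp]; auto.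
  unfold sh, shv in Hp. apply in_map_iff in Hp. destruct Hp as [q [<- Hq]]. simpl.
  replace (snd q + 0) with (snd q) by lia. apply IHk; auto.
Qed.

Lemma hel_length slots s k : length (hel slots s k) = (k * length slots)%nat.
Proof. induction k; simpl; auto. rewrite length_app. unfold sh, shv. rewrite length_map. lia. Qed.

Definition rows_in (lo hi : Z) (L : list pt) : Prop := forall p, In p L -> lo <= snd p < hi.
Definition tr (lo hi P : Z) (L : list pt) : Prop :=
  forall r rho, lo <= r < hi -> exists p, In p L /\ snd p = r /\ exists t, fst p = rho + t * P.

Lemma hel_tr slots s k lo hi P :
  (forall r rho, lo <= r < hi -> exists (q : pt) (j : nat) (t : Z), In q slots /\ snd q = r /\ (j < k)%nat /\
     fst q + Z.of_nat j * s = rho + t * P) -> tr lo hi P (hel slots s k).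
Proof.
  intros H r rho Hr. destruct (H r rho Hr) as [q [j [t [Hq [Er [Hj Et]]]]]].
  exists (padd q (Z.of_nat j * s, 0)). split; [apply in_hel; auto|]. unfold padd; simpl.
  split; [lia|]. exists t. lia.
Qed.

Lemma single_cond (q : pt) k P rho : 0 < P -> Z.of_nat k = P ->
  exists j t, (j < k)%nat /\ fst q + Z.of_nat j * 1 = rho + t * P.
Proof.
  intros HP Hk. exists (Z.to_nat ((rho - fst q) mod P)), (- ((rho - fst q) / P)).
  pose proof (Z.mod_pos_bound (rho - fst q) P HP). pose proof (Z.div_mod (rho - fst q) P ltac:(lia)).
  split; lia.
Qed.

Lemma ladder_cond (q : pt) p rho : exists j t, (j < S (2 * p))%nat /\
  fst q + Z.of_nat j * 2 = rho + t * (2 * Z.of_nat p + 1).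
Proof.
  set (P := 2 * Z.of_nat p + 1). set (z := (rho - fst q) * (Z.of_nat p + 1)).
  exists (Z.to_nat (z mod P)), (rho - fst q - 2 * (z / P)).
  pose proof (Z.mod_pos_bound z P ltac:(lia)). pose proof (Z.div_mod z P ltac:(lia)).
  split; [lia|]. rewrite Z2Nat.id by lia. subst z P. nia.
Qed.

Lemma double_cond a1 a2 p rho : Z.odd (a2 - a1) = true ->
  exists a j t, (a = a1 \/ a = a2) /\ (j < S p)%nat /\ a + Z.of_nat j * 2 = rho + t * (2 * Z.of_nat p + 2).
Proof.
  intros Hodd. set (P := 2 * Z.of_nat p + 2).
  destruct (Z.even (rho - a1)) eqn:E.
  - apply Z.even_spec in E. destruct E as [u Eu].
    exists a1, (Z.to_nat (u mod (Z.of_nat p + 1))), (- (u / (Z.of_nat p + 1))).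
    pose proof (Z.mod_pos_bound u (Z.of_nat p + 1) ltac:(lia)). pose proof (Z.div_mod u (Z.of_nat p + 1) ltac:(lia)).
    split; [auto|]. split; [lia|]. rewrite Z2Nat.id by lia. subst P. lia.
  - assert (E2 : Z.even (rho - a2) = true).
    { replace (rho - a2) with ((rho - a1) - (a2 - a1)) by lia. rewrite Z.even_sub, E, <- Z.negb_odd, Hodd. auto. }
    apply Z.even_spec in E2. destruct E2 as [u Eu].
    exists a2, (Z.to_nat (u mod (Z.of_nat p + 1))), (- (u / (Z.of_nat p + 1))).
    pose proof (Z.mod_pos_bound u (Z.of_nat p + 1) ltac:(lia)). pose proof (Z.div_mod u (Z.of_nat p + 1) ltac:(lia)).
    split; [auto|]. split; [lia|]. rewrite Z2Nat.id by lia. subst P. lia.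
Qed.

Lemma in_merge D X1 Y1 X2 Y2 p :
  In p (X1 ++ Y1) \/ In p (X2 ++ Y2) ->
  In p (Y1 ++ sh D X1 ++ sh D (rev X2) ++ rev Y2) \/ In (padd p (D,0)) (Y1 ++ sh D X1 ++ sh D (rev X2) ++ rev Y2).
Proof.
  intros [H|H]; apply in_app_or in H; destruct H as [H|H].
  - right. apply in_or_app; right. apply in_or_app; left. unfold sh, shv.
    apply (in_map (fun q => padd q (D,0))); auto.
  - left. apply in_or_app; left; auto.
  - right. apply in_or_app; right. apply in_or_app; right. apply in_or_app; left. unfold sh, shv.
    apply (in_map (fun q => padd q (D,0))). rewrite <- in_rev. auto.
  - left. apply in_or_app; right. apply in_or_app; right. apply in_or_app; right. rewrite <- in_rev. auto.
Qed.

Lemma in_merge_inv D X1 Y1 X2 Y2 p :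
  In p (Y1 ++ sh D X1 ++ sh D (rev X2) ++ rev Y2) ->
  exists q, (In q (X1 ++ Y1) \/ In q (X2 ++ Y2)) /\ snd q = snd p.
Proof.
  intros H. repeat (apply in_app_or in H; destruct H as [H|H]).
  - exists p. split; auto. left. apply in_or_app; auto.
  - unfold sh, shv in H. apply in_map_iff in H. destruct H as [q [<- Hq]]. exists q.
    split; [left; apply in_or_app; auto|]. unfold padd; simpl; lia.
  - unfold sh, shv in H. apply in_map_iff in H. destruct H as [q [<- Hq]]. exists q.
    split; [right; apply in_or_app; left; apply in_rev; auto|]. unfold padd; simpl; lia.
  - exists p. split; [right; apply in_or_app; right; apply in_rev; auto|]. auto.
Qed.

Lemma length_merge D X1 Y1 X2 Y2 :
  length (Y1 ++ sh D X1 ++ sh D (rev X2) ++ rev Y2) = (length (X1 ++ Y1) + length (X2 ++ Y2))%nat.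
Proof. unfold sh, shv. rewrite !length_app, !length_map, !length_rev. lia. Qed.

Lemma tr_merge D X1 Y1 X2 Y2 lo mid hi P d : D = d * P ->
  tr lo mid P (X1 ++ Y1) -> tr mid hi P (X2 ++ Y2) ->
  tr lo hi P (Y1 ++ sh D X1 ++ sh D (rev X2) ++ rev Y2).
Proof.
  intros ED H1 H2 r rho Hr.
  assert (Hex : exists p, (In p (X1 ++ Y1) \/ In p (X2 ++ Y2)) /\ snd p = r /\ exists t, fst p = rho + t * P).
  { destruct (Z_lt_le_dec r mid).
    - destruct (H1 r rho ltac:(lia)) as [p [? ?]]. exists p; auto.
    - destruct (H2 r rho ltac:(lia)) as [p [? ?]]. exists p; auto. }
  destruct Hex as [p [Hp [Er [t Et]]]].
  destruct (in_merge D X1 Y1 X2 Y2 p Hp) as [Hq|Hq].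
  - exists p. split; auto. split; auto. exists t; auto.
  - exists (padd p (D,0)). split; auto. unfold padd; simpl. split; [lia|]. exists (t + d). subst D. lia.
Qed.

Lemma tr_shv lo hi P L t : tr lo hi P L -> tr (lo + snd t) (hi + snd t) P (shv t L).
Proof.
  intros H r rho Hr. destruct (H (r - snd t) (rho - fst t) ltac:(lia)) as [p [Hp [Er [u Eu]]]].
  exists (padd p t). split; [apply (in_map (fun q => padd q t)); auto|]. unfold padd. simpl. split; [lia|]. exists u. lia.
Qed.

Lemma rows_shv lo hi L t : rows_in lo hi L -> rows_in (lo + snd t) (hi + snd t) (shv t L).
Proof.
  intros H p Hp. unfold shv in Hp. apply in_map_iff in Hp. destruct Hp as [q [<- Hq]].
  specialize (H q Hq). unfold padd. simpl. lia.
Qed.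


Definition swap (p : pt) : pt := (snd p, fst p).

Lemma knight_swap p q : knight_adj p q -> knight_adj (swap p) (swap q).
Proof. unfold knight_adj, swap; simpl. lia. Qed.

Lemma chain_swap l : chain l -> chain (map swap l).
Proof.
  induction l as [|x l IH]; simpl; auto. destruct l as [|y l']; simpl; auto.
  intros [H1 H2]. split; [apply knight_swap; auto|]. apply IH; auto.
Qed.

Lemma hd_swap l : l <> [] -> hd z0 (map swap l) = swap (hd z0 l).
Proof. destruct l; simpl; congruence. Qed.

Lemma last_swap l : l <> [] -> last (map swap l) z0 = swap (last l z0).
Proof.
  induction l as [|x l IH]; intros H; [congruence|].
  destruct l as [|y l']; simpl; auto. simpl in IH. apply IH. discriminate.
Qed.

Lemma normalize L : closedL L -> forall p0, In p0 L -> snd p0 = 0 ->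
  exists L', closedL L' /\ hd z0 L' = (0,0) /\ length L' = length L /\
    forall q, In q L -> In (padd q (- fst p0, 0)) L'.
Proof.
  intros HL p0 Hp0 E0. apply In_split in Hp0. destruct Hp0 as [U [V EL]]. subst L.
  exists (shv (- fst p0, 0) ((p0 :: V) ++ U)). split; [|split; [|split]].
  - apply closed_shv, closed_rot; auto. discriminate.
  - rewrite hd_shv by discriminate. simpl. unfold padd; simpl. f_equal; lia.
  - unfold shv. rewrite length_map, !length_app. simpl. lia.
  - intros q Hq. unfold shv. apply (in_map (fun x => padd x (- fst p0, 0))).
    apply in_app_or in Hq. apply in_or_app. simpl in *. tauto.
Qed.

Lemma closed_tour m n L : 0 < m -> 0 < n -> 3 <= m * n -> closedL L -> hd z0 L = (0,0) ->
  Z.of_nat (length L) = m * n -> cover m n L -> has_nullhomotopic_tour m n.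
Proof.
  intros Hm Hn H3 [Hne [Hch Hcl]] Hhd Hlen Hcov.
  apply (tour_of_list m n L); auto. rewrite Hhd in Hcl. exact Hcl.
Qed.

Lemma S1_tour m n L : 0 < m -> 0 < n -> 3 <= m * n -> closedL L -> tr 0 n m L ->
  Z.of_nat (length L) = m * n -> has_nullhomotopic_tour m n.
Proof.
  intros Hm Hn H3 HL Htr Hlen.
  destruct (Htr 0 0 ltac:(lia)) as [p0 [Hp0 [E0 _]]].
  destruct (normalize L HL p0 Hp0 E0) as [L' [HL' [Hhd [Hlen' Hin]]]].
  apply (closed_tour m n L'); auto. rewrite Hlen'; auto.
  intros x y Hx Hy. destruct (Htr y (x + fst p0) Hy) as [q [Hq [Eq [t Et]]]].
  exists (padd q (- fst p0, 0)). split; auto. unfold padd; simpl.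
  apply (sv_intro m n _ _ x y (- t) 0); [intros _; lia | discriminate | lia].
Qed.

Lemma even_2t t : Z.even (2 * t) = true.
Proof. rewrite Z.even_mul. reflexivity. Qed.
Lemma even_2t1 t : Z.even (2 * t + 1) = false.
Proof. rewrite Z.even_add, Z.even_mul. reflexivity. Qed.

Lemma S2_tour m n M L : m = 2 * M -> 0 < M -> 0 < n -> 3 <= m * n -> closedL L -> tr 0 M (2 * n) L ->
  Z.of_nat (length L) = m * n -> has_nullhomotopic_tour m n.
Proof.
  intros Em HM Hn H3 HL Htr Hlen.
  destruct (Htr 0 0 ltac:(lia)) as [p0 [Hp0 [E0 _]]].
  destruct (normalize L HL p0 Hp0 E0) as [L' [[Hne [Hch Hcl]] [Hhd [Hlen' Hin]]]].
  apply (closed_tour m n (map swap L')); try lia.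
  - split; [destruct L'; simpl; congruence|]. split; [apply chain_swap; auto|].
    rewrite last_swap, hd_swap by auto. apply knight_swap; auto.
  - rewrite hd_swap by auto. rewrite Hhd. reflexivity.
  - rewrite length_map. lia.
  - intros x y Hx Hy. destruct (Z_lt_le_dec x M) as [HxM|HxM].
    + destruct (Htr x (y + fst p0) ltac:(lia)) as [q [Hq [Eq [t Et]]]].
      exists (swap (padd q (- fst p0, 0))). split; [apply in_map; auto|]. unfold swap, padd; simpl.
      apply (sv_intro m n _ _ x y 0 (- (2 * t))).
      * intros _. lia.
      * rewrite Z.even_opp, even_2t. discriminate.
      * nia.
    + destruct (Htr (m - 1 - x) (y + n + fst p0) ltac:(lia)) as [q [Hq [Eq [t Et]]]].
      exists (swap (padd q (- fst p0, 0))). split; [apply in_map; auto|]. unfold swap, padd; simpl.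
      apply (sv_intro m n _ _ x y 0 (- (2 * t + 1))).
      * rewrite Z.even_opp, even_2t1. discriminate.
      * intros _. lia.
      * nia.
Qed.

Definition kb (p q : pt) : bool :=
  let da := Z.abs (fst p - fst q) in let db := Z.abs (snd p - snd q) in
  ((da =? 1) && (db =? 2)) || ((da =? 2) && (db =? 1)).

Lemma kb_ok p q : kb p q = true -> knight_adj p q.
Proof.
  unfold kb, knight_adj. intros H. apply orb_true_iff in H.
  destruct H as [H|H]; apply andb_true_iff in H; destruct H as [H1 H2]; apply Z.eqb_eq in H1, H2; auto.
Qed.

Fixpoint chainb (l : list pt) : bool :=
  match l with
  | x :: l' => match l' with y :: _ => kb x y && chainb l' | nil => true end
  | nil => true
  end.

Lemma chainb_ok l : chainb l = true -> chain l.
Proof.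
  induction l as [|x l IH]; simpl; auto. destruct l as [|y l']; auto.
  intros H. apply andb_true_iff in H. destruct H. split; [apply kb_ok|apply IH]; auto.
Qed.


Lemma chain_cons x l : chain l -> (l = [] \/ knight_adj x (hd z0 l)) -> chain (x :: l).
Proof. intros H1 H2. destruct l as [|y l']; simpl; auto. destruct H2; [discriminate|]. split; auto. Qed.

Lemma chain_map_seq (f : nat -> pt) a k : (forall i, knight_adj (f i) (f (S i))) -> chain (map f (seq a k)).
Proof.
  intros H. revert a. induction k; intros a; simpl; auto.
  destruct k; simpl; auto. split; auto. specialize (IHk (S a)). simpl in IHk. exact IHk.
Qed.

Lemma last_map_seq (f : nat -> pt) a k : last (map f (seq a (S k))) z0 = f (a + k)%nat.
Proof.
  revert a. induction k; intros a; simpl. f_equal; lia.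
  specialize (IHk (S a)). simpl in IHk. rewrite IHk. f_equal; lia.
Qed.

Definition Hs (h : nat) : list pt :=
  (0,0) :: map (fun i => (Z.of_nat i + 2, 2 * Z.of_nat i + 1)) (seq 0 (S h)) ++
  (Z.of_nat h, 2 * Z.of_nat h + 2) :: map (fun i => (Z.of_nat h - Z.of_nat i + 1, 2 * Z.of_nat h - 2 * Z.of_nat i)) (seq 0 h).

Lemma Hs_chain h : chain (Hs h).
Proof.
  unfold Hs. apply chain_cons.
  - apply chain_app.
    + apply chain_map_seq. intros i. unfold knight_adj; cbn [fst snd]; rewrite Nat2Z.inj_succ; lia.
    + apply chain_cons. apply chain_map_seq. intros i. unfold knight_adj; cbn [fst snd]; rewrite Nat2Z.inj_succ; lia.
      destruct h; [left; auto|right]. cbn [hd map seq]. unfold knight_adj; cbn [fst snd]. lia.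
    + right; right. rewrite last_map_seq. cbn [hd]. unfold knight_adj; cbn [fst snd]. lia.
  - right. cbn [hd map seq app]. unfold knight_adj; cbn [fst snd]. lia.
Qed.

Lemma Hs_last h : last (Hs h) z0 = if (h =? 0)%nat then (0, 2) else (2, 2).
Proof.
  unfold Hs. rewrite last_cons by (apply app_nil_l'; discriminate).
  rewrite last_app by discriminate. destruct h as [|h'].
  - simpl. f_equal.
  - rewrite last_cons by discriminate. rewrite last_map_seq. cbv beta. cbn [Nat.eqb]. f_equal; lia.
Qed.

Lemma Hs_trans h : knight_adj (last (Hs h) z0) (padd (hd z0 (Hs h)) (1, 0)).
Proof.
  rewrite Hs_last. unfold Hs. cbn [hd]. destruct h; cbn [Nat.eqb]; unfold knight_adj, padd; cbn [fst snd]; lia.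
Qed.

Lemma Hs_rows h q : In q (Hs h) -> 0 <= snd q < 2 * Z.of_nat h + 3.
Proof.
  unfold Hs. intros H. destruct H as [<-|H]; [cbn [fst snd]; lia|].
  apply in_app_or in H. destruct H as [H|[<-|H]].
  - apply in_map_iff in H. destruct H as [i [<- Hi]]. apply in_seq in Hi. cbn [fst snd]. lia.
  - cbn [fst snd]. lia.
  - apply in_map_iff in H. destruct H as [i [<- Hi]]. apply in_seq in Hi. cbn [fst snd]. lia.
Qed.

Lemma Hs_cover h r : 0 <= r < 2 * Z.of_nat h + 3 -> exists q, In q (Hs h) /\ snd q = r.
Proof.
  intros Hr. unfold Hs.
  pose proof (Z.div_mod r 2 ltac:(lia)) as Er. pose proof (Z.mod_pos_bound r 2 ltac:(lia)) as Br.
  destruct (Z.eq_dec r 0) as [->|H0]; [exists (0,0); simpl; auto|].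
  destruct (Z.eq_dec r (2 * Z.of_nat h + 2)) as [Et|Et].
  { exists (Z.of_nat h, 2 * Z.of_nat h + 2). split; auto. right. apply in_or_app. right. left. auto. }
  destruct (Z.eq_dec (r mod 2) 1) as [Eo|Eo].
  - set (i := Z.to_nat (r / 2)). exists (Z.of_nat i + 2, 2 * Z.of_nat i + 1). split.
    + right. apply in_or_app. left. apply (in_map (fun i => (Z.of_nat i + 2, 2 * Z.of_nat i + 1))).
      apply in_seq. subst i. lia.
    + cbn [fst snd]. subst i. lia.
  - set (i := Z.to_nat (Z.of_nat h - r / 2)). exists (Z.of_nat h - Z.of_nat i + 1, 2 * Z.of_nat h - 2 * Z.of_nat i).
    split.
    + right. apply in_or_app. right. right.
      apply (in_map (fun i => (Z.of_nat h - Z.of_nat i + 1, 2 * Z.of_nat h - 2 * Z.of_nat i))).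
      apply in_seq. subst i. lia.
    + cbn [fst snd]. subst i. lia.
Qed.

Lemma Hs_length h : length (Hs h) = (2 * h + 3)%nat.
Proof. unfold Hs. simpl. rewrite length_app. simpl. rewrite !length_map, !length_seq. lia. Qed.

Lemma Hs_ne h : Hs h <> [].
Proof. unfold Hs. discriminate. Qed.

Definition Hrest (h : nat) : list pt :=
  map (fun i => (Z.of_nat i + 2, 2 * Z.of_nat i + 1)) (seq 0 (S h)) ++
  (Z.of_nat h, 2 * Z.of_nat h + 2) :: map (fun i => (Z.of_nat h - Z.of_nat i + 1, 2 * Z.of_nat h - 2 * Z.of_nat i)) (seq 0 h).

Lemma Hs_split h : Hs h = (0,0) :: Hrest h.
Proof. reflexivity. Qed.

Lemma Hrest_hd h : hd z0 (Hrest h) = (2, 1).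
Proof. reflexivity. Qed.

Lemma Hhel_tr h P : 0 < P -> tr 0 (2 * Z.of_nat h + 3) P (hel (Hs h) 1 (Z.to_nat P)).
Proof.
  intros HP. apply hel_tr. intros r rho Hr.
  destruct (Hs_cover h r Hr) as [q [Hq Eq]].
  destruct (single_cond q (Z.to_nat P) P rho HP ltac:(lia)) as [j [t [Hj Et]]].
  exists q, j, t. auto.
Qed.

Lemma hel_rows_in slots s k lo hi : (forall q, In q slots -> lo <= snd q < hi) -> rows_in lo hi (hel slots s k).
Proof. intros H p Hp. apply (hel_rows slots s k (fun r => lo <= r < hi)); auto. Qed.

Definition G3 : list pt := [(0,0); (-2,1); (0,2)].
Definition LA : list pt := [(0,0); (1,2)].
Definition LB : list pt := [(2,1); (3,3)].
Definition D6 : list pt := [(0,0);(1,2);(2,4);(0,5);(1,3);(-1,4);(1,5);(2,3);(1,1);(-1,0);(-2,2);(0,1)].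

Lemma rows_merge D X1 Y1 X2 Y2 lo mid hi :
  rows_in lo mid (X1 ++ Y1) -> rows_in mid hi (X2 ++ Y2) -> lo <= mid <= hi ->
  rows_in lo hi (Y1 ++ sh D X1 ++ sh D (rev X2) ++ rev Y2).
Proof.
  intros H1 H2 Hm p Hp. destruct (in_merge_inv D X1 Y1 X2 Y2 p Hp) as [q [[Hq|Hq] Eq]].
  - specialize (H1 q Hq). lia.
  - specialize (H2 q Hq). lia.
Qed.

Definition cylP (W P : Z) : Prop :=
  exists L, closedL L /\ tr 0 W P L /\ Z.of_nat (length L) = W * P.

Lemma cyl_even (h : nat) (P : Z) : 1 <= P -> cylP (2 * Z.of_nat h + 6) P.
Proof.
  intros HP. set (k := Z.to_nat P). assert (Hk : Z.of_nat k = P) by (subst k; lia).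
  destruct k as [|p] eqn:Ek; [lia|].
  set (L1 := hel G3 1 (S p)).
  set (L2 := shv (-1, 3) (hel (Hs h) 1 (S p))).
  set (X1 := [(0,0); (-2,1)] : list pt). set (Y1 := (0,2) :: sh 1 (hel G3 1 p)).
  set (X2 := [(-1,3)] : list pt). set (Y2 := shv (-1,3) (Hrest h ++ sh 1 (hel (Hs h) 1 p))).
  assert (E1 : L1 = X1 ++ Y1) by reflexivity.
  assert (E2 : L2 = X2 ++ Y2) by reflexivity.
  assert (H1 : helical (Z.of_nat (S p) * 1) L1).
  { apply hel_helical. discriminate. apply chainb_ok; reflexivity. apply kb_ok; reflexivity. }
  assert (H2 : helical (Z.of_nat (S p) * 1) L2).
  { apply helical_shv, hel_helical. apply Hs_ne. apply Hs_chain. apply Hs_trans. }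
  exists (Y1 ++ sh (Z.of_nat (S p) * 1) X1 ++ sh (Z.of_nat (S p) * 1) (rev X2) ++ rev Y2).
  split; [|split].
  - apply merge_closed.
    + rewrite <- E1; exact H1.
    + rewrite <- E2; exact H2.
    + discriminate.
    + discriminate.
    + discriminate.
    + unfold Y2, Hrest. simpl. discriminate.
    + apply kb_ok; reflexivity.
    + unfold Y1, Y2, Hrest. simpl. apply kb_ok; reflexivity.
  - apply (tr_merge _ X1 Y1 X2 Y2 0 3 _ P 1). lia.
    + rewrite <- E1. unfold L1. apply hel_tr. intros r rho Hr.
      assert (Hq : exists q, In q G3 /\ snd q = r).
      { assert (Hr3 : r = 0 \/ r = 1 \/ r = 2) by lia. destruct Hr3 as [E|[E|E]]; subst r.
        - exists (0,0); simpl; auto.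
        - exists (-2,1); simpl; auto.
        - exists (0,2); simpl; auto. }
      destruct Hq as [q [Hq Eq]].
      destruct (single_cond q (S p) P rho ltac:(lia) Hk) as [j [t [Hj Et]]]. exists q, j, t. auto.
    + rewrite <- E2. unfold L2. replace 3 with (0 + snd (-1, 3)) by reflexivity.
      replace (2 * Z.of_nat h + 6) with (2 * Z.of_nat h + 3 + snd (-1,3)) by (simpl; lia).
      apply tr_shv. replace (S p) with (Z.to_nat P) by lia. apply Hhel_tr. lia.
  - rewrite length_merge, <- E1, <- E2. unfold L1, L2, shv. rewrite length_map, !hel_length, Hs_length.
    change (length G3) with 3%nat. rewrite <- Hk. nia.
Qed.

Lemma tr_merge_gen D X1 Y1 X2 Y2 lo hi P d : D = d * P ->
  (forall r rho, lo <= r < hi -> exists p, (In p (X1 ++ Y1) \/ In p (X2 ++ Y2)) /\ snd p = r /\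
     exists t, fst p = rho + t * P) ->
  tr lo hi P (Y1 ++ sh D X1 ++ sh D (rev X2) ++ rev Y2).
Proof.
  intros ED H r rho Hr. destruct (H r rho Hr) as [p [Hp [Er [t Et]]]].
  destruct (in_merge D X1 Y1 X2 Y2 p Hp) as [Hq|Hq].
  - exists p. split; auto. split; auto. exists t; auto.
  - exists (padd p (D,0)). split; auto. unfold padd; simpl. split; [lia|]. exists (t + d). subst D. lia.
Qed.

Lemma hel_point slots s k q j rho t P : In q slots -> (j < k)%nat -> fst q + Z.of_nat j * s = rho + t * P ->
  exists p, In p (hel slots s k) /\ snd p = snd q /\ exists t', fst p = rho + t' * P.
Proof.
  intros Hq Hj E. exists (padd q (Z.of_nat j * s, 0)). split; [apply in_hel; auto|].
  unfold padd; simpl. split; [lia|]. exists t. lia.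
Qed.

Lemma cyl_L4 (p : nat) : cylP 4 (2 * Z.of_nat p + 1).
Proof.
  set (P := 2 * Z.of_nat p + 1).
  set (L1 := hel LA 2 (S (2 * p))). set (L2 := hel LB 2 (S (2 * p))).
  set (X1 := [(0,0)] : list pt). set (Y1 := (1,2) :: sh 2 (hel LA 2 (2 * p))).
  set (X2 := [(2,1)] : list pt). set (Y2 := (3,3) :: sh 2 (hel LB 2 (2 * p))).
  assert (E1 : L1 = X1 ++ Y1) by reflexivity.
  assert (E2 : L2 = X2 ++ Y2) by reflexivity.
  assert (H1 : helical (Z.of_nat (S (2 * p)) * 2) L1).
  { apply hel_helical. discriminate. apply chainb_ok; reflexivity. apply kb_ok; reflexivity. }
  assert (H2 : helical (Z.of_nat (S (2 * p)) * 2) L2).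
  { apply hel_helical. discriminate. apply chainb_ok; reflexivity. apply kb_ok; reflexivity. }
  exists (Y1 ++ sh (Z.of_nat (S (2 * p)) * 2) X1 ++ sh (Z.of_nat (S (2 * p)) * 2) (rev X2) ++ rev Y2).
  split; [|split].
  - apply merge_closed.
    + rewrite <- E1; exact H1.
    + rewrite <- E2; exact H2.
    + discriminate.
    + discriminate.
    + discriminate.
    + discriminate.
    + apply kb_ok; reflexivity.
    + apply kb_ok; reflexivity.
  - apply (tr_merge_gen _ X1 Y1 X2 Y2 0 4 P 2). subst P. lia.
    intros r rho Hr.
    assert (Hr4 : r = 0 \/ r = 1 \/ r = 2 \/ r = 3) by lia.
    destruct (ladder_cond (0, r) p rho) as [j [t [Hj Et]]].
    destruct Hr4 as [E|[E|[E|E]]]; subst r.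
    + destruct (hel_point LA 2 (S (2 * p)) (0,0) j rho t P) as [x [Hx [Ex Htx]]]; auto.
      simpl; auto. exists x. split; [left; exact Hx|]. auto.
    + destruct (ladder_cond (2,1) p rho) as [j' [t' [Hj' Et']]].
      destruct (hel_point LB 2 (S (2 * p)) (2,1) j' rho t' P) as [x [Hx [Ex Htx]]]; auto.
      simpl; auto. exists x. split; [right; exact Hx|]. auto.
    + destruct (ladder_cond (1,2) p rho) as [j' [t' [Hj' Et']]].
      destruct (hel_point LA 2 (S (2 * p)) (1,2) j' rho t' P) as [x [Hx [Ex Htx]]]; auto.
      simpl; auto. exists x. split; [left; exact Hx|]. auto.
    + destruct (ladder_cond (3,3) p rho) as [j' [t' [Hj' Et']]].
      destruct (hel_point LB 2 (S (2 * p)) (3,3) j' rho t' P) as [x [Hx [Ex Htx]]]; auto.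
      simpl; auto. exists x. split; [right; exact Hx|]. auto.
  - rewrite length_merge, <- E1, <- E2. unfold L1, L2. rewrite !hel_length.
    change (length LA) with 2%nat. change (length LB) with 2%nat. subst P. lia.
Qed.

Lemma D6_pairs r : 0 <= r < 6 -> exists a1 a2, In (a1, r) D6 /\ In (a2, r) D6 /\ Z.odd (a2 - a1) = true.
Proof.
  intros Hr. assert (Hr6 : r = 0 \/ r = 1 \/ r = 2 \/ r = 3 \/ r = 4 \/ r = 5) by lia.
  destruct Hr6 as [E|[E|[E|[E|[E|E]]]]]; subst r.
  - exists 0, (-1). simpl. repeat split; tauto.
  - exists 1, 0. simpl. repeat split; tauto.
  - exists 1, (-2). simpl. repeat split; tauto.
  - exists 1, 2. simpl. repeat split; tauto.
  - exists 2, (-1). simpl. repeat split; tauto.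
  - exists 0, 1. simpl. repeat split; tauto.
Qed.

Definition D6a : list pt := [(0,0);(1,2);(2,4);(0,5);(1,3);(-1,4)].
Definition D6b : list pt := [(1,5);(2,3);(1,1);(-1,0);(-2,2);(0,1)].

Lemma cyl_odd (h p : nat) : cylP (2 * Z.of_nat h + 9) (2 * Z.of_nat p + 2).
Proof.
  set (P := 2 * Z.of_nat p + 2).
  set (L1 := hel D6 2 (S p)).
  set (L2 := shv (0, 6) (hel (Hs h) 1 (S (2 * p + 1)))).
  set (X1 := D6a). set (Y1 := D6b ++ sh 2 (hel D6 2 p)).
  set (X2 := [(0,6)] : list pt). set (Y2 := shv (0,6) (Hrest h ++ sh 1 (hel (Hs h) 1 (2 * p + 1)))).
  assert (E1 : L1 = X1 ++ Y1) by reflexivity.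
  assert (E2 : L2 = X2 ++ Y2) by reflexivity.
  assert (H1 : helical P L1).
  { replace P with (Z.of_nat (S p) * 2) by (subst P; lia).
    apply hel_helical. discriminate. apply chainb_ok; reflexivity. apply kb_ok; reflexivity. }
  assert (H2 : helical P L2).
  { replace P with (Z.of_nat (S (2 * p + 1)) * 1) by (subst P; lia).
    apply helical_shv, hel_helical. apply Hs_ne. apply Hs_chain. apply Hs_trans. }
  exists (Y1 ++ sh P X1 ++ sh P (rev X2) ++ rev Y2).
  split; [|split].
  - apply merge_closed.
    + rewrite <- E1; exact H1.
    + rewrite <- E2; exact H2.
    + discriminate.
    + discriminate.
    + discriminate.
    + unfold Y2, Hrest. simpl. discriminate.
    + apply kb_ok; reflexivity.
    + unfold Y1, Y2, Hrest. simpl. apply kb_ok; reflexivity.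
  - apply (tr_merge_gen _ X1 Y1 X2 Y2 0 _ P 1). lia.
    intros r rho Hr. destruct (Z_lt_le_dec r 6) as [Hr6|Hr6].
    + destruct (D6_pairs r ltac:(lia)) as [a1 [a2 [Ha1 [Ha2 Hodd]]]].
      destruct (double_cond a1 a2 p rho Hodd) as [a [j [t [Ea [Hj Et]]]]].
      assert (Ha : In (a, r) D6) by (destruct Ea; subst a; auto).
      destruct (hel_point D6 2 (S p) (a, r) j rho t P) as [x [Hx [Ex Htx]]]; auto.
      exists x. split; [left; exact Hx|]. auto.
    + assert (Htr2 : tr 6 (2 * Z.of_nat h + 9) P L2).
      { unfold L2. replace 6 with (0 + snd (0, 6)) by reflexivity.
        replace (2 * Z.of_nat h + 9) with (2 * Z.of_nat h + 3 + snd (0,6)) by (simpl; lia).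
        apply tr_shv. replace (S (2 * p + 1)) with (Z.to_nat P) by (subst P; lia). apply Hhel_tr. subst P; lia. }
      destruct (Htr2 r rho ltac:(lia)) as [x [Hx Hx']]. exists x. split; [right; exact Hx|]. auto.
  - rewrite length_merge, <- E1, <- E2. unfold L1, L2, shv. rewrite length_map, !hel_length, Hs_length.
    change (length D6) with 12%nat. subst P. nia.
Qed.


Definition checkb (m n : Z) (L : list pt) : bool :=
  Zpeq (hd z0 L) (0,0) && chainb L && kb (last L z0) (0,0) && (Z.of_nat (length L) =? m * n) &&
  forallb (fun t => existsb (fun q => Zpeq (canon m n q) t) L) (rect m n).

Lemma checkb_ok m n L : 0 < m -> 0 < n -> 3 <= m * n -> checkb m n L = true -> has_nullhomotopic_tour m n.
Proof.
  intros Hm Hn H3 H. unfold checkb in H. rewrite !andb_true_iff in H.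
  destruct H as [[[[H1 H2] H3'] H4] H5]. apply Zpeq_true in H1. apply Z.eqb_eq in H4.
  assert (Hne : L <> []) by (intros E; subst L; simpl in H4; lia).
  apply (tour_of_list m n L); auto.
  - apply chainb_ok; auto.
  - apply kb_ok; auto.
  - intros x y Hx Hy. rewrite forallb_forall in H5. specialize (H5 (x,y) (proj2 (in_rect m n x y) (conj Hx Hy))).
    apply existsb_exists in H5. destruct H5 as [q [Hq Eq]]. apply Zpeq_true in Eq.
    exists q. split; auto. apply canon_sv; auto. rewrite Eq. symmetry. apply canon_id; auto.
Qed.

Definition T_2_3 : list pt := [(0,0); (-2,1); (0,2); (-1,0); (0,-2); (2,-1)].
Definition T_2_4 : list pt := [(0,0); (-2,1); (-1,3); (1,2); (3,1); (1,0); (3,-1); (1,-2)].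
Definition T_2_5 : list pt := [(0,0); (-2,1); (-1,-1); (-2,-3); (0,-2); (2,-1); (3,-3); (2,-5); (0,-4); (-1,-2)].
Definition T_2_7 : list pt := [(0,0); (-2,1); (-1,-1); (-3,-2); (-2,-4); (-4,-3); (-3,-5); (-4,-7); (-6,-6); (-8,-5); (-7,-3); (-5,-4); (-4,-2); (-2,-1)].
Definition T_4_1 : list pt := [(0,0); (-2,1); (-3,3); (-1,2)].
Definition T_4_2 : list pt := [(0,0); (1,-2); (-1,-1); (-2,1); (-4,2); (-3,0); (-1,1); (-2,-1)].
Definition T_4_3 : list pt := [(0,0); (-2,1); (0,2); (-2,3); (-4,4); (-6,5); (-7,7); (-9,6); (-7,5); (-5,4); (-3,3); (-1,2)].
Definition T_4_4 : list pt := [(0,0); (-2,1); (-4,2); (-2,3); (0,4); (2,5); (4,6); (6,7); (7,5); (9,4); (11,3); (9,2); (7,1); (5,0); (3,-1); (1,-2)].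
Definition T_4_5 : list pt := [(0,0); (-2,1); (-4,2); (-2,3); (0,4); (2,5); (0,6); (2,7); (4,8); (2,9); (1,11); (-1,12); (-2,10); (-4,9); (-3,7); (-4,5); (-3,3); (-4,1); (-3,-1); (-1,-2)].
Definition T_4_7 : list pt := [(0,0); (-2,1); (-4,2); (-2,3); (-4,4); (-3,6); (-1,5); (1,4); (-1,3); (-2,5); (0,6); (2,7); (4,8); (6,9); (5,7); (3,6); (1,5); (-1,4); (1,3); (-1,2); (-2,4); (-4,3); (-3,1); (-5,0); (-6,2); (-4,1); (-3,-1); (-1,-2)].
Definition T_6_1 : list pt := [(0,0); (-2,1); (-3,3); (-4,1); (-2,0); (-1,2)].
Definition T_6_2 : list pt := [(0,0); (1,-2); (3,-1); (4,-3); (2,-4); (0,-3); (-2,-2); (-3,-4); (-1,-3); (-2,-1); (0,-2); (2,-1)].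
Definition T_6_3 : list pt := [(0,0); (-2,1); (-3,-1); (-4,1); (-3,3); (-2,5); (-3,7); (-5,6); (-7,5); (-6,7); (-5,9); (-4,11); (-6,10); (-4,9); (-2,8); (-1,6); (-2,4); (-1,2)].
Definition T_6_4 : list pt := [(0,0); (-2,1); (0,2); (2,1); (3,-1); (1,-2); (0,-4); (-2,-5); (-3,-7); (-4,-9); (-2,-10); (-3,-12); (-5,-13); (-6,-11); (-8,-12); (-6,-13); (-7,-11); (-6,-9); (-5,-7); (-3,-6); (-4,-4); (-3,-2); (-2,0); (-1,2)].
Definition T_6_5 : list pt := [(0,0); (-2,1); (-1,-1); (-2,-3); (-3,-5); (-2,-7); (-4,-6); (-2,-5); (-3,-3); (-1,-4); (0,-2); (-2,-1); (-4,-2); (-6,-3); (-4,-4); (-3,-6); (-5,-7); (-6,-5); (-7,-3); (-9,-4); (-8,-6); (-10,-7); (-8,-8); (-7,-6); (-5,-5); (-4,-3); (-6,-4); (-4,-5); (-2,-4); (-1,-2)].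
Definition T_6_7 : list pt := [(0,0); (-2,1); (-1,-1); (1,-2); (0,-4); (-1,-6); (-3,-7); (-2,-5); (-4,-4); (-2,-3); (-3,-1); (-4,1); (-6,2); (-7,4); (-8,6); (-6,5); (-5,3); (-4,5); (-5,7); (-6,9); (-7,11); (-6,13); (-5,11); (-4,9); (-3,11); (-4,13); (-5,15); (-4,17); (-3,19); (-2,17); (-3,15); (-1,14); (-2,16); (-3,14); (-2,12); (-4,11); (-3,9); (-2,7); (-1,5); (0,3); (-1,1); (-2,-1)].
Definition T_8_1 : list pt := [(0,0); (-2,1); (-3,3); (-1,2); (1,1); (3,0); (4,2); (2,1)].
Definition T_8_2 : list pt := [(0,0); (1,-2); (3,-1); (5,-2); (7,-3); (6,-1); (4,0); (2,1); (4,2); (6,1); (7,-1); (5,0); (3,1); (1,0); (0,-2); (2,-1)].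
Definition T_8_3 : list pt := [(0,0); (-2,1); (0,2); (-1,4); (-3,3); (-2,5); (0,4); (1,6); (2,8); (4,7); (6,8); (8,9); (10,10); (12,9); (11,11); (10,9); (11,7); (10,5); (9,7); (8,5); (6,6); (4,5); (3,3); (2,1)].
Definition T_8_4 : list pt := [(0,0); (-2,1); (0,2); (2,1); (4,0); (2,-1); (0,-2); (-2,-1); (-4,-2); (-6,-3); (-7,-1); (-5,-2); (-4,-4); (-6,-5); (-7,-7); (-9,-8); (-10,-10); (-12,-11); (-13,-13); (-11,-12); (-9,-13); (-8,-11); (-6,-10); (-7,-8); (-5,-9); (-3,-8); (-1,-9); (0,-7); (2,-6); (1,-4); (3,-3); (1,-2)].
Definition T_8_5 : list pt := [(0,0); (-2,1); (-1,-1); (-2,-3); (-3,-1); (-1,-2); (0,-4); (1,-2); (2,0); (4,1); (6,0); (8,1); (7,3); (9,4); (10,2); (9,0); (8,2); (7,4); (5,3); (7,2); (9,3); (11,4); (10,6); (12,7); (14,6); (12,5); (11,3); (10,1); (9,-1); (7,0); (6,2); (4,3); (3,1); (5,0); (4,2); (2,3); (4,4); (5,2); (4,0); (2,-1)].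
Definition T_8_7 : list pt := [(0,0); (1,2); (3,1); (2,-1); (1,-3); (3,-4); (4,-2); (6,-1); (5,-3); (7,-2); (8,-4); (10,-5); (11,-7); (12,-9); (11,-11); (10,-13); (9,-15); (10,-17); (8,-16); (6,-17); (5,-15); (6,-13); (8,-12); (7,-14); (5,-13); (3,-14); (4,-12); (2,-11); (1,-13); (3,-12); (4,-10); (6,-11); (7,-13); (8,-11); (6,-12); (5,-14); (6,-16); (4,-15); (2,-14); (0,-15); (-1,-17); (0,-19); (1,-21); (2,-23); (0,-22); (-1,-20); (-2,-18); (0,-17); (2,-16); (1,-14); (2,-12); (3,-10); (4,-8); (3,-6); (2,-4); (1,-2)].
Definition T_10_1 : list pt := [(0,0); (-2,1); (-3,3); (-1,2); (1,1); (3,0); (4,2); (5,0); (3,-1); (2,1)].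
Definition T_10_2 : list pt := [(0,0); (1,-2); (2,-4); (3,-6); (1,-5); (0,-3); (2,-2); (0,-1); (-2,-2); (-1,-4); (1,-3); (2,-1); (4,0); (6,-1); (5,1); (3,0); (5,-1); (6,1); (4,2); (2,1)].
Definition T_10_3 : list pt := [(0,0); (1,2); (-1,1); (-3,2); (-4,0); (-2,1); (-1,-1); (1,0); (3,1); (4,-1); (2,-2); (0,-3); (2,-4); (4,-3); (3,-1); (5,-2); (7,-3); (9,-4); (11,-5); (12,-3); (14,-2); (13,-4); (11,-3); (9,-2); (8,-4); (6,-3); (5,-1); (3,-2); (4,0); (2,1)].
Definition T_10_4 : list pt := [(0,0); (-1,2); (-3,3); (-2,1); (0,2); (2,1); (1,3); (3,4); (4,2); (5,4); (4,6); (2,5); (3,3); (1,4); (3,5); (2,3); (0,4); (-2,5); (-4,4); (-2,3); (-1,5); (-3,6); (-1,7); (1,6); (3,7); (1,8); (3,9); (5,8); (6,6); (4,5); (5,3); (4,1); (5,-1); (3,-2); (2,-4); (0,-3); (2,-2); (0,-1); (2,0); (1,2)].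
Definition T_10_5 : list pt := [(0,0); (-2,1); (-1,-1); (-2,-3); (-3,-1); (-1,-2); (0,-4); (1,-2); (2,0); (0,-1); (-1,-3); (-2,-5); (-3,-7); (-1,-8); (1,-9); (2,-7); (1,-5); (-1,-4); (0,-2); (-2,-1); (-3,-3); (-4,-5); (-2,-6); (0,-5); (1,-7); (2,-9); (3,-11); (2,-13); (3,-15); (4,-17); (3,-19); (5,-18); (7,-19); (6,-21); (5,-19); (4,-21); (5,-23); (3,-22); (4,-20); (3,-18); (4,-16); (3,-14); (4,-12); (5,-10); (6,-8); (4,-9); (3,-7); (2,-5); (1,-3); (2,-1)].
Definition T_10_7 : list pt := [(0,0); (1,2); (3,1); (2,-1); (1,-3); (-1,-2); (0,-4); (2,-5); (3,-3); (1,-2); (2,0); (4,-1); (6,0); (5,2); (3,3); (4,5); (5,7); (6,5); (4,4); (2,5); (1,7); (3,6); (2,4); (3,2); (5,3); (4,1); (5,-1); (6,1); (7,3); (8,1); (7,-1); (8,-3); (9,-1); (10,1); (11,3); (9,2); (10,4); (9,6); (8,8); (7,10); (8,12); (6,11); (7,9); (9,10); (10,8); (11,6); (13,5); (12,7); (14,8); (15,10); (13,9); (14,11); (13,13); (11,14); (10,12); (11,10); (12,12); (10,11); (9,9); (10,7); (8,6); (7,4); (8,2); (6,3); (7,1); (5,0); (4,-2); (3,0); (4,2); (2,1)].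
Definition T_14_1 : list pt := [(0,0); (-2,1); (-3,3); (-1,2); (1,1); (3,0); (4,2); (5,4); (7,5); (6,7); (5,5); (4,3); (3,1); (2,-1)].
Definition T_14_2 : list pt := [(0,0); (1,2); (2,0); (0,1); (1,-1); (3,-2); (4,0); (2,1); (3,3); (4,5); (5,3); (6,1); (8,0); (7,2); (9,1); (10,-1); (8,-2); (7,-4); (5,-3); (6,-5); (4,-6); (3,-4); (2,-6); (1,-4); (-1,-3); (-2,-1); (0,-2); (2,-1)].
Definition T_14_3 : list pt := [(0,0); (1,2); (-1,1); (-3,2); (-4,0); (-2,1); (-1,-1); (1,0); (3,1); (2,3); (3,5); (2,7); (4,6); (5,4); (4,2); (5,0); (6,2); (4,3); (2,2); (4,1); (6,0); (5,2); (7,1); (9,2); (11,1); (13,0); (12,2); (13,4); (11,3); (10,1); (12,0); (10,-1); (9,1); (7,2); (5,3); (7,4); (8,2); (6,3); (5,1); (3,0); (1,1); (-1,2)].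
Definition T_14_4 : list pt := [(0,0); (-1,2); (-3,3); (-2,1); (0,2); (2,1); (1,3); (3,4); (4,2); (2,3); (0,4); (-2,5); (-4,6); (-5,4); (-7,5); (-6,7); (-5,9); (-4,11); (-3,9); (-2,11); (-4,10); (-5,8); (-6,10); (-8,11); (-9,13); (-7,12); (-5,13); (-4,15); (-6,14); (-8,13); (-9,15); (-11,16); (-10,14); (-8,15); (-6,16); (-7,14); (-6,12); (-7,10); (-8,12); (-6,13); (-5,15); (-4,17); (-5,19); (-4,21); (-2,20); (-3,18); (-2,16); (-3,14); (-1,13); (-3,12); (-2,10); (-3,8); (-1,7); (0,5); (-1,3); (1,2)].
Definition T_14_5 : list pt := [(0,0); (1,2); (3,1); (2,-1); (0,-2); (1,-4); (3,-3); (1,-2); (-1,-1); (1,0); (-1,1); (-2,-1); (-1,-3); (-3,-2); (-4,0); (-3,2); (-4,4); (-3,6); (-4,8); (-3,10); (-5,11); (-6,9); (-5,7); (-6,5); (-5,3); (-6,1); (-5,-1); (-6,-3); (-8,-2); (-7,0); (-8,2); (-6,3); (-8,4); (-10,3); (-12,4); (-10,5); (-8,6); (-10,7); (-12,6); (-14,5); (-13,7); (-11,6); (-12,8); (-10,9); (-8,10); (-10,11); (-12,12); (-14,13); (-16,14); (-15,16); (-17,15); (-18,13); (-20,12); (-22,11); (-20,10); (-21,8); (-23,9); (-22,7); (-20,6); (-18,5); (-16,6); (-15,4); (-13,3); (-11,2); (-10,0); (-8,-1); (-6,-2); (-4,-1); (-2,0); (-1,2)].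
Definition T_14_7 : list pt := [(0,0); (1,-2); (0,-4); (1,-6); (0,-8); (1,-10); (0,-12); (1,-14); (0,-16); (1,-18); (0,-20); (1,-22); (0,-24); (1,-26); (3,-25); (5,-24); (6,-22); (5,-20); (6,-18); (5,-16); (6,-14); (5,-12); (6,-10); (4,-9); (3,-7); (2,-9); (1,-7); (0,-5); (2,-6); (0,-7); (2,-8); (0,-9); (2,-10); (0,-11); (1,-9); (3,-8); (5,-7); (6,-5); (4,-4); (6,-3); (5,-5); (6,-7); (4,-8); (3,-6); (1,-5); (2,-7); (3,-5); (2,-3); (3,-1); (4,-3); (2,-4); (0,-3); (2,-2); (0,-1); (1,1); (2,3); (3,5); (4,7); (5,5); (6,3); (4,4); (6,5); (5,3); (3,4); (1,3); (0,1); (1,-1); (2,1); (4,2); (6,1); (5,-1); (4,1); (6,2); (5,0); (6,-2); (5,-4); (6,-6); (5,-8); (4,-6); (2,-5); (1,-3); (3,-4); (4,-2); (3,0); (2,2); (4,3); (3,1); (4,-1); (5,1); (3,2); (2,0); (3,-2); (4,0); (6,-1); (5,-3); (4,-5); (3,-3); (2,-1)].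
Definition T_3_2 : list pt := [(0,0); (1,-2); (-1,-1); (-2,1); (0,2); (2,1)].


Definition F7 (q : nat) : list pt :=
  let m := 2 * Z.of_nat q + 5 in
  map (fun i => (Z.of_nat i, 2 * Z.of_nat i)) (seq 0 (2 * q + 3)) ++
  [(m - 1, 2 * m - 5); (m - 2, 2 * m - 3); (m, 2 * m - 4); (m + 1, 2 * m - 6)] ++
  map (fun k => (m - 1 - Z.of_nat k, 2 * m - 7 - 2 * Z.of_nat k)) (seq 0 (2 * q + 3)).

Lemma F7_tour (q : nat) : has_nullhomotopic_tour (2 * Z.of_nat q + 5) 2.
Proof.
  set (m := 2 * Z.of_nat q + 5).
  assert (Hm : 0 < m) by (subst m; lia).
  set (up := map (fun i => (Z.of_nat i, 2 * Z.of_nat i)) (seq 0 (2 * q + 3)) : list pt).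
  set (turn := [(m - 1, 2 * m - 5); (m - 2, 2 * m - 3); (m, 2 * m - 4); (m + 1, 2 * m - 6)] : list pt).
  set (down := map (fun k => (m - 1 - Z.of_nat k, 2 * m - 7 - 2 * Z.of_nat k)) (seq 0 (2 * q + 3)) : list pt).
  assert (EF : F7 q = up ++ turn ++ down) by reflexivity.
  assert (Hup : up <> []) by (subst up; replace (2 * q + 3)%nat with (S (2 * q + 2)) by lia; discriminate).
  assert (Hdown : down <> []) by (subst down; replace (2 * q + 3)%nat with (S (2 * q + 2)) by lia; discriminate).
  assert (Lup : last up z0 = (m - 3, 2 * m - 6)).
  { subst up. replace (2 * q + 3)%nat with (S (2 * q + 2)) by lia. rewrite last_map_seq.
    subst m. f_equal; lia. }
  assert (Ldown : last down z0 = (2, -1)).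
  { subst down. replace (2 * q + 3)%nat with (S (2 * q + 2)) by lia. rewrite last_map_seq.
    subst m. f_equal; lia. }
  assert (Hdown_hd : hd z0 down = (m - 1, 2 * m - 7)).
  { subst down. replace (2 * q + 3)%nat with (S (2 * q + 2)) by lia. simpl. f_equal; lia. }
  assert (Hup_hd : hd z0 up = (0, 0)).
  { subst up. replace (2 * q + 3)%nat with (S (2 * q + 2)) by lia. reflexivity. }
  apply (tour_of_list _ _ (F7 q)); try lia.
  - rewrite EF, hd_app by auto. exact Hup_hd.
  - rewrite EF. apply app_nil_l'. apply app_nil_l'. auto.
  - rewrite EF. apply chain_app; [| apply chain_app |].
    + subst up. apply chain_map_seq. intros i. unfold knight_adj; cbn [fst snd]. lia.
    + subst turn. simpl. unfold knight_adj; simpl. lia.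
    + subst down. apply chain_map_seq. intros i. unfold knight_adj; cbn [fst snd]. lia.
    + right; right. rewrite Hdown_hd. subst turn. simpl. unfold knight_adj; simpl. lia.
    + right; right. rewrite Lup, hd_app by discriminate. subst turn. simpl. unfold knight_adj; simpl. lia.
  - rewrite EF. rewrite !last_app by (auto; apply app_nil_l'; auto). unfold z0 in Ldown. rewrite Ldown. unfold knight_adj; simpl. lia.
  - rewrite EF, !length_app. subst up down turn. rewrite !length_map, !length_seq. simpl. lia.
  - intros x y Hx Hy.
    assert (Hin_up : forall i, 0 <= i <= m - 3 -> In (i, 2 * i) (F7 q)).
    { intros i Hi. rewrite EF. apply in_or_app. left. subst up.
      apply in_map_iff. exists (Z.to_nat i). split; [f_equal; lia | apply in_seq; subst m; lia]. }
    assert (Hin_down : forall k, 0 <= k <= m - 3 -> In (m - 1 - k, 2 * m - 7 - 2 * k) (F7 q)).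
    { intros k Hk. rewrite EF. apply in_or_app. right. apply in_or_app. right. subst down.
      apply in_map_iff. exists (Z.to_nat k). split; [f_equal; lia | apply in_seq; subst m; lia]. }
    assert (Hin_turn : forall p, In p turn -> In p (F7 q)).
    { intros p Hp. rewrite EF. apply in_or_app. right. apply in_or_app. left. auto. }
    pose proof (Z.div_mod x 2 ltac:(lia)) as Ex. pose proof (Z.mod_pos_bound x 2 ltac:(lia)) as Bx.
    set (u := x / 2) in *.
    assert (Hy2 : y = 0 \/ y = 1) by lia.
    destruct Hy2 as [Ey|Ey]; subst y.
    +
      destruct (Z.eq_dec x 1) as [E1|E1].
      { exists (m + 1, 2 * m - 6). split; [apply Hin_turn; subst turn; simpl; tauto|].
        apply (sv_intro m 2 _ _ _ _ (-1) (2 * (- Z.of_nat q - 1))).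
        - intros _. lia. - rewrite even_2t. discriminate. - subst m; lia. }
      destruct (Z.eq_dec x (m - 1)) as [E2|E2].
      { exists (m, 2 * m - 4). split; [apply Hin_turn; subst turn; simpl; tauto|].
        apply (sv_intro m 2 _ _ _ _ 1 (2 * (- Z.of_nat q - 2) + 1)).
        - rewrite even_2t1. discriminate. - intros _. lia. - subst m; lia. }
      destruct (Z.eq_dec (x mod 2) 0) as [E3|E3].
      * exists (x, 2 * x). split; [apply Hin_up; lia|].
        apply (sv_intro m 2 _ _ _ _ 0 (2 * (- u))).
        -- intros _. lia. -- rewrite even_2t. discriminate. -- lia.
      * exists (m - 1 - x, 2 * (m - 1 - x)). split; [apply Hin_up; lia|].
        apply (sv_intro m 2 _ _ _ _ 0 (2 * (u - Z.of_nat q - 2) + 1)).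
        -- rewrite even_2t1. discriminate. -- intros _. lia. -- subst m; lia.
    +
      destruct (Z.eq_dec x 1) as [E1|E1].
      { exists (m - 2, 2 * m - 3). split; [apply Hin_turn; subst turn; simpl; tauto|].
        apply (sv_intro m 2 _ _ _ _ 0 (2 * (- Z.of_nat q - 2) + 1)).
        - rewrite even_2t1. discriminate. - intros _. lia. - subst m; lia. }
      destruct (Z.eq_dec x (m - 1)) as [E2|E2].
      { exists (m - 1, 2 * m - 5). split; [apply Hin_turn; subst turn; simpl; tauto|].
        apply (sv_intro m 2 _ _ _ _ 0 (2 * (- Z.of_nat q - 1))).
        - intros _. lia. - rewrite even_2t. discriminate. - subst m; lia. }
      destruct (Z.eq_dec (x mod 2) 0) as [E3|E3].
      * exists (m - 1 - x, 2 * m - 7 - 2 * x). split; [apply Hin_down; lia|].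
        apply (sv_intro m 2 _ _ _ _ 0 (2 * (u - Z.of_nat q - 1) + 1)).
        -- rewrite even_2t1. discriminate. -- intros _. lia. -- subst m; lia.
      * exists (m - 1 - (m - 1 - x), 2 * m - 7 - 2 * (m - 1 - x)). split; [apply Hin_down; lia|].
        apply (sv_intro m 2 _ _ _ _ 0 (2 * (1 - u))).
        -- intros _. lia. -- rewrite even_2t. discriminate. -- subst m; lia.
Qed.


Definition conc_pairs : list (Z * Z) := [(2,3); (2,4); (2,5); (2,7); (4,1); (4,2); (4,3); (4,4); (4,5); (4,7); (6,1); (6,2); (6,3); (6,4); (6,5); (6,7); (8,1); (8,2); (8,3); (8,4); (8,5); (8,7); (10,1); (10,2); (10,3); (10,4); (10,5); (10,7); (14,1); (14,2); (14,3); (14,4); (14,5); (14,7); (3,2)].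

Definition conc (m n : Z) : list pt :=
  if (m =? 2) && (n =? 3) then T_2_3 else
  if (m =? 2) && (n =? 4) then T_2_4 else
  if (m =? 2) && (n =? 5) then T_2_5 else
  if (m =? 2) && (n =? 7) then T_2_7 else
  if (m =? 4) && (n =? 1) then T_4_1 else
  if (m =? 4) && (n =? 2) then T_4_2 else
  if (m =? 4) && (n =? 3) then T_4_3 else
  if (m =? 4) && (n =? 4) then T_4_4 else
  if (m =? 4) && (n =? 5) then T_4_5 else
  if (m =? 4) && (n =? 7) then T_4_7 else
  if (m =? 6) && (n =? 1) then T_6_1 else
  if (m =? 6) && (n =? 2) then T_6_2 else
  if (m =? 6) && (n =? 3) then T_6_3 else
  if (m =? 6) && (n =? 4) then T_6_4 else
  if (m =? 6) && (n =? 5) then T_6_5 else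
  if (m =? 6) && (n =? 7) then T_6_7 else
  if (m =? 8) && (n =? 1) then T_8_1 else
  if (m =? 8) && (n =? 2) then T_8_2 else
  if (m =? 8) && (n =? 3) then T_8_3 else
  if (m =? 8) && (n =? 4) then T_8_4 else
  if (m =? 8) && (n =? 5) then T_8_5 else
  if (m =? 8) && (n =? 7) then T_8_7 else
  if (m =? 10) && (n =? 1) then T_10_1 else
  if (m =? 10) && (n =? 2) then T_10_2 else
  if (m =? 10) && (n =? 3) then T_10_3 else
  if (m =? 10) && (n =? 4) then T_10_4 else
  if (m =? 10) && (n =? 5) then T_10_5 else
  if (m =? 10) && (n =? 7) then T_10_7 else
  if (m =? 14) && (n =? 1) then T_14_1 else
  if (m =? 14) && (n =? 2) then T_14_2 else
  if (m =? 14) && (n =? 3) then T_14_3 else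
  if (m =? 14) && (n =? 4) then T_14_4 else
  if (m =? 14) && (n =? 5) then T_14_5 else
  if (m =? 14) && (n =? 7) then T_14_7 else
  if (m =? 3) && (n =? 2) then T_3_2 else
  [].

Lemma conc_all : forallb (fun p => (3 <=? fst p * snd p) && checkb (fst p) (snd p) (conc (fst p) (snd p))) conc_pairs = true.
Proof. vm_compute. reflexivity. Qed.

Lemma conc_tour m n : 0 < m -> 0 < n -> existsb (fun p => Zpeq p (m, n)) conc_pairs = true ->
  has_nullhomotopic_tour m n.
Proof.
  intros Hm Hn H. apply existsb_exists in H. destruct H as [p [Hp Ep]]. apply Zpeq_true in Ep. subst p.
  pose proof conc_all as A. rewrite forallb_forall in A. specialize (A _ Hp). simpl in A.
  apply andb_true_iff in A. destruct A as [A1 A2]. apply Z.leb_le in A1.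
  apply (checkb_ok m n (conc m n)); auto.
Qed.

Lemma tour_11 : has_nullhomotopic_tour 1 1.
Proof.
  exists 0%nat, (fun _ => (0,0)). split; [|reflexivity].
  split; [reflexivity|]. split; [apply sv_refl|]. split; [intros; lia|]. split; [intros; lia|].
  split; [intros; lia|]. intros p. exists 0%nat. split; [lia|]. apply canon_sv; try lia.
  unfold canon. simpl. rewrite !Z.mod_1_r. destruct (Z.even _); reflexivity.
Qed.

Lemma S1_from_cyl m n : 0 < m -> 0 < n -> 3 <= m * n -> cylP n m -> has_nullhomotopic_tour m n.
Proof.
  intros Hm Hn H3 [L [HL [Htr Hlen]]]. apply (S1_tour m n L); auto. lia.
Qed.

Lemma S2_from_cyl m n M : m = 2 * M -> 0 < M -> 0 < n -> 3 <= m * n -> cylP M (2 * n) -> has_nullhomotopic_tour m n.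
Proof.
  intros Em HM Hn H3 [L [HL [Htr Hlen]]]. apply (S2_tour m n M L); auto. lia.
Qed.

Lemma Zodd_mod x : Z.odd x = true <-> x mod 2 = 1.
Proof.
  rewrite Z.odd_spec. split.
  - intros [k Hk]. subst. rewrite Z.add_comm, Z.mul_comm, Z_mod_plus_full. reflexivity.
  - intros H. exists (x / 2). pose proof (Z.div_mod x 2 ltac:(lia)). lia.
Qed.

Theorem sufficiency m n : 0 < m -> 0 < n ->
  ~ ( (Z.odd m = true /\ Z.odd n = true /\ (1 < m \/ 1 < n)) \/
      (m <= 2 /\ n <= 2 /\ (1 < m \/ 1 < n)) ) -> has_nullhomotopic_tour m n.
Proof.
  intros Hm Hn Hex. rewrite !Zodd_mod in Hex.
  pose proof (Z.mod_pos_bound m 2 ltac:(lia)). pose proof (Z.mod_pos_bound n 2 ltac:(lia)).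
  pose proof (Z.div_mod m 2 ltac:(lia)). pose proof (Z.div_mod n 2 ltac:(lia)).
  destruct (Z.eq_dec m 1) as [E1|E1]; [destruct (Z.eq_dec n 1) as [E2|E2]; [subst; apply tour_11|]|].
  { (* m = 1, n <> 1: n even >= 4 *)
    subst m. assert (n mod 2 = 0) by lia.
    destruct (Z_le_dec 6 n).
    - apply S1_from_cyl; try lia. replace n with (2 * Z.of_nat (Z.to_nat (n / 2 - 3)) + 6) by lia. apply cyl_even. lia.
    - assert (n = 4) by lia. subst n. apply S1_from_cyl; try lia. apply (cyl_L4 0). }
  destruct (Z_le_dec 6 n) as [Hn6|Hn6].
  { destruct (Z.eq_dec (n mod 2) 0) as [Ev|Od].
    - apply S1_from_cyl; try nia. replace n with (2 * Z.of_nat (Z.to_nat (n / 2 - 3)) + 6) by lia. apply cyl_even. lia.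
    - assert (Hme : m mod 2 = 0) by lia.
      destruct (Z_le_dec 9 n) as [Hn9|Hn9].
      + apply S1_from_cyl; try nia.
        replace n with (2 * Z.of_nat (Z.to_nat (n / 2 - 4)) + 9) by lia.
        replace m with (2 * Z.of_nat (Z.to_nat (m / 2 - 1)) + 2) by lia. apply cyl_odd.
      + assert (n = 7) by lia. subst n.
        destruct (Z_le_dec 12 m) as [Hm12|Hm12]; [destruct (Z.eq_dec m 14) as [E14|E14]|].
        * apply conc_tour; try lia. subst m. reflexivity.
        * remember (m / 2) as M eqn:HM. pose proof (Z.div_mod M 2 ltac:(lia)) as HM2. pose proof (Z.mod_pos_bound M 2 ltac:(lia)) as HM3. destruct (Z.eq_dec (M mod 2) 0).
          -- apply (S2_from_cyl m 7 M); try lia. replace M with (2 * Z.of_nat (Z.to_nat (M / 2 - 3)) + 6) by lia.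
             apply cyl_even. lia.
          -- apply (S2_from_cyl m 7 M); try lia. replace M with (2 * Z.of_nat (Z.to_nat (M / 2 - 4)) + 9) by lia.
             replace (2 * 7) with (2 * Z.of_nat 6 + 2) by reflexivity. apply cyl_odd.
        * apply conc_tour; try lia.
          assert (Hm' : m = 2 \/ m = 4 \/ m = 6 \/ m = 8 \/ m = 10) by lia.
          destruct Hm' as [E|[E|[E|[E|E]]]]; subst m; reflexivity. }
  destruct (Z.eq_dec n 4) as [E4|E4]; [destruct (Z.eq_dec (m mod 2) 1) as [Mo|Me]|].
  { subst n. apply S1_from_cyl; try lia. replace m with (2 * Z.of_nat (Z.to_nat (m / 2)) + 1) by lia. apply cyl_L4. }
  all: cycle 1.
  { destruct (Z.eq_dec n 2) as [E2|E2]; [destruct (Z.eq_dec (m mod 2) 1) as [Mo|Me]; [destruct (Z_le_dec 5 m)|]|].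
    - subst n. replace m with (2 * Z.of_nat (Z.to_nat (m / 2 - 2)) + 5) by lia. apply F7_tour.
    - subst n. assert (m = 3) by lia. subst m. apply conc_tour; try lia. reflexivity.
    - (* n = 2, m even *)
      subst n. destruct (Z_le_dec 12 m) as [Hm12|Hm12]; [destruct (Z.eq_dec m 14) as [E14|E14]|].
      * apply conc_tour; try lia. subst m. reflexivity.
      * remember (m / 2) as M eqn:HM. pose proof (Z.div_mod M 2 ltac:(lia)) as HM2. pose proof (Z.mod_pos_bound M 2 ltac:(lia)) as HM3. destruct (Z.eq_dec (M mod 2) 0).
        -- apply (S2_from_cyl m 2 M); try lia. replace M with (2 * Z.of_nat (Z.to_nat (M / 2 - 3)) + 6) by lia.
           apply cyl_even. lia.
        -- apply (S2_from_cyl m 2 M); try lia. replace M with (2 * Z.of_nat (Z.to_nat (M / 2 - 4)) + 9) by lia.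
           replace (2 * 2) with (2 * Z.of_nat 1 + 2) by reflexivity. apply cyl_odd.
      * apply conc_tour; try lia.
        assert (Hm' : m = 4 \/ m = 6 \/ m = 8 \/ m = 10) by lia.
        destruct Hm' as [E|[E|[E|E]]]; subst m; reflexivity.
    - (* n in {1,3,5}: m even *)
      assert (Hn' : n = 1 \/ n = 3 \/ n = 5) by lia.
      assert (Hme : m mod 2 = 0) by lia.
      destruct (Z_le_dec 12 m) as [Hm12|Hm12]; [destruct (Z.eq_dec m 14) as [E14|E14]|].
      * apply conc_tour; try lia. subst m. destruct Hn' as [E|[E|E]]; subst n; reflexivity.
      * remember (m / 2) as M eqn:HM. pose proof (Z.div_mod M 2 ltac:(lia)) as HM2. pose proof (Z.mod_pos_bound M 2 ltac:(lia)) as HM3. destruct (Z.eq_dec (M mod 2) 0).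
        -- apply (S2_from_cyl m n M); try lia. replace M with (2 * Z.of_nat (Z.to_nat (M / 2 - 3)) + 6) by lia.
           apply cyl_even. lia.
        -- apply (S2_from_cyl m n M); try lia. replace M with (2 * Z.of_nat (Z.to_nat (M / 2 - 4)) + 9) by lia.
           replace (2 * n) with (2 * Z.of_nat (Z.to_nat (n - 1)) + 2) by lia. apply cyl_odd.
      * apply conc_tour; try lia.
        assert (Hm' : m = 2 \/ m = 4 \/ m = 6 \/ m = 8 \/ m = 10) by lia.
        destruct Hm' as [E|[E|[E|[E|E]]]]; destruct Hn' as [E'|[E'|E']]; subst m n; try reflexivity; exfalso; lia. }
  (* n = 4, m even *)
  subst n. destruct (Z_le_dec 12 m) as [Hm12|Hm12]; [destruct (Z.eq_dec m 14) as [E14|E14]|].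
  - apply conc_tour; try lia. subst m. reflexivity.
  - remember (m / 2) as M eqn:HM. pose proof (Z.div_mod M 2 ltac:(lia)) as HM2. pose proof (Z.mod_pos_bound M 2 ltac:(lia)) as HM3. destruct (Z.eq_dec (M mod 2) 0).
    + apply (S2_from_cyl m 4 M); try lia. replace M with (2 * Z.of_nat (Z.to_nat (M / 2 - 3)) + 6) by lia.
      apply cyl_even. lia.
    + apply (S2_from_cyl m 4 M); try lia. replace M with (2 * Z.of_nat (Z.to_nat (M / 2 - 4)) + 9) by lia.
      replace (2 * 4) with (2 * Z.of_nat 3 + 2) by reflexivity. apply cyl_odd.
  - apply conc_tour; try lia.
    assert (Hm' : m = 2 \/ m = 4 \/ m = 6 \/ m = 8 \/ m = 10) by lia.
    destruct Hm' as [E|[E|[E|[E|E]]]]; subst m; reflexivity.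
Qed.

Theorem theorem6p1 (m n : Z) (hm : 0 < m) (hn : 0 < n) :
  has_nullhomotopic_tour m n <->
  ~ ( (Z.odd m = true /\ Z.odd n = true /\ (1 < m \/ 1 < n)) \/
      (m <= 2 /\ n <= 2 /\ (1 < m \/ 1 < n)) ).
Proof.
  split.
  - apply necessity; auto.
  - apply sufficiency; auto.
Qed.
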